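(* Fix $a\in(0,\tfrac12)$. Suppose that for some $E\in(0,1]$ and some $\lambda\le\lambda_0:=-1+a$ the $\Theta$-flow described in the context has a saddles connector from $(0,0)$ to $(\pi,-\pi)$. Then for every $E'\in[0,E)$ the $\Theta$-flow with parameters $(E',\lambda)$ has a corridor $\mathcal K_1(E',\lambda)$ of winding number $0$.
   Context: For $a\in(0,\tfrac12)$, $E\in[0,1]$, $\lambda\in\mathbb R$, the $\Theta$-flow is the system on the strip $[0,\pi]\times\mathbb R$ (with $\Theta$ understood mod $2\pi$ on the cylinder) $$\dot\theta=\sin\theta,\qquad \dot\Theta=-2a\sin\theta\cos\theta\cos\Theta+2aE\sin^2\theta\sin\Theta-\sin\Theta+2\lambda\sin\theta.$$ Its equilibria are $(0,0)$, $(0,\pi)$ (left) and $(\pi,-\pi)$, $(\pi,0)$ (right), mod $2\pi$ in $\Theta$. Let $\widetilde{\mathcal W}^-$ be the unique orbit in $(0,\pi)\times\mathbb R$ with $\alpha$-limit $(0,0)$ and $\widetilde{\mathcal W}^+$ the unique orbit with $\omega$-limit $(\pi,-\pi)$. A saddles connector from $(0,0)$ to $(\pi,-\pi)$ is an orbit in the strip with $\alpha$-limit $(0,0)$ and $\omega$-limit $(\pi,-\pi)$ (i.e. $\widetilde{\mathcal W}^-=\widetilde{\mathcal W}^+$). The flow has a corridor $\mathcal K_1(E,\lambda)$ of winding number $k\in\mathbb Z$ if $\widetilde{\mathcal W}^-\neq\widetilde{\mathcal W}^+$ and the $\omega$-limit of $\widetilde{\mathcal W}^-$ is $(\pi,-2\pi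 k)$. *)

(* Defs.v *)
From Stdlib Require Import Reals.
From Coquelicot Require Import Coquelicot.
Open Scope R_scope.

Definition theta_rhs (a E lam th Th : R) : R :=
  - 2 * a * sin th * cos th * cos Th + 2 * a * E * (sin th) ^ 2 * sin Th
  - sin Th + 2 * lam * sin th.

(* A (global-in-time) solution of the Theta-flow lying in the open strip
   (0,pi) x R, with Theta lifted to R. *)
Definition strip_solution (a E lam : R) (th Th : R -> R) : Prop :=
  forall t : R,
    0 < th t < PI /\
    is_derive th t (sin (th t)) /\
    is_derive Th t (theta_rhs a E lam (th t) (Th t)).

Definition alpha_limit (th Th : R -> R) (p q : R) : Prop :=
  filterlim th (Rbar_locally m_infty) (locally p) /\
  filterlim Th (Rbar_locally m_infty) (locally q).

Definition omega_limit (th Th : R -> R) (p q : R) : Prop :=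
  filterlim th (Rbar_locally p_infty) (locally p) /\
  filterlim Th (Rbar_locally p_infty) (locally q).

Definition saddles_connector (a E lam : R) : Prop :=
  exists th Th, strip_solution a E lam th Th /\
    alpha_limit th Th 0 0 /\ omega_limit th Th PI (- PI).

(* Corridor K_1(E,lam) of winding number k: the orbit W^- (the orbit with
   alpha-limit (0,0)) exists, is not W^+ (i.e. does not tend to (pi,-pi)),
   and its omega-limit is (pi, -2 pi k). *)
Definition corridor_K1 (a E lam : R) (k : Z) : Prop :=
  (exists th Th, strip_solution a E lam th Th /\ alpha_limit th Th 0 0) /\
  (forall th Th, strip_solution a E lam th Th -> alpha_limit th Th 0 0 ->
     ~ omega_limit th Th PI (- PI) /\
     omega_limit th Th PI (- 2 * PI * IZR k)).

(* Main.v *)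
Require Import Defs.
From Stdlib Require Import Reals.
From Coquelicot Require Import Coquelicot.
From Stdlib Require Import Lra Lia ClassicalEpsilon Classical.
Open Scope R_scope.

Lemma deriv_cont (f : R -> R) v l : is_derive f v l ->
  forall eps, 0 < eps -> exists del, 0 < del /\
    forall u, Rabs (u - v) < del -> Rabs (f u - f v) < eps.
Proof.
  intros H eps Heps.
  apply is_derive_Reals in H.
  assert (Hc : continuity_pt f v).
  { apply derivable_continuous_pt. exists l. exact H. }
  destruct (Hc eps Heps) as [alp [Halp Hx]].
  exists alp; split; auto. intros u Hu.
  destruct (Req_dec u v) as [->|Hne].
  - rewrite Rminus_diag, Rabs_R0; lra.
  - apply (Hx u). split. split. exact I. now apply not_eq_sym. simpl; unfold R_dist; auto.
Qed.

Lemma deriv_pos_side (f : R -> R) v l : is_derive f v l -> 0 < l ->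
  forall eta, 0 < eta ->
  (exists w, v - eta < w < v /\ f w < f v) /\
  (exists w, v < w < v + eta /\ f v < f w).
Proof.
  intros H Hl eta Heta. apply is_derive_Reals in H.
  destruct (H (l/2)) as [del Hdel]; [lra|].
  assert (Hm : 0 < Rmin del eta) by (apply Rmin_pos; [apply cond_pos|lra]).
  pose proof (Rmin_l del eta). pose proof (Rmin_r del eta).
  split.
  - set (h := - Rmin del eta / 2).
    assert (Hh : h <> 0) by (unfold h; lra).
    assert (Hhd : Rabs h < del).
    { unfold h. rewrite Rabs_left by lra. lra. }
    specialize (Hdel h Hh Hhd).
    exists (v + h). split. unfold h; lra.
    apply Rabs_def2 in Hdel. destruct Hdel as [Hq1 Hq2].
    assert (E : f (v + h) - f v = ((f (v + h) - f v) / h) * h) by (field; auto).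
    assert (Hhn : h < 0) by (unfold h; lra).
    nra.
  - set (h := Rmin del eta / 2).
    assert (Hh : h <> 0) by (unfold h; lra).
    assert (Hhd : Rabs h < del).
    { unfold h. rewrite Rabs_right by lra. lra. }
    specialize (Hdel h Hh Hhd).
    exists (v + h). split. unfold h; lra.
    apply Rabs_def2 in Hdel. destruct Hdel as [Hq1 Hq2].
    assert (E : f (v + h) - f v = ((f (v + h) - f v) / h) * h) by (field; auto).
    assert (Hhn : h > 0) by (unfold h; lra).
    nra.
Qed.

Lemma deriv_neg_side (f : R -> R) v l : is_derive f v l -> l < 0 ->
  forall eta, 0 < eta ->
  (exists w, v - eta < w < v /\ f v < f w) /\
  (exists w, v < w < v + eta /\ f w < f v).
Proof.
  intros H Hl eta Heta.
  assert (H' : is_derive (fun x => - f x) v (- l)) by (exact (is_derive_opp f v l H)).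
  destruct (deriv_pos_side _ _ _ H' ltac:(lra) eta Heta) as [[w [Hw1 Hw2]] [w' [Hw1' Hw2']]].
  split; [exists w | exists w']; split; auto; lra.
Qed.

Lemma crossing_down (f df : R -> R) a b c :
  (forall t, is_derive f t (df t)) -> a < b -> c < f a -> f b <= c ->
  exists v, a < v <= b /\ f v = c /\ df v <= 0.
Proof.
  intros Hd Hab Ha Hb.
  set (S := fun w => a <= w <= b /\ forall u, a <= u <= w -> c < f u).
  assert (HB : bound S). { exists b. intros w [Hw _]. lra. }
  assert (HE : exists x, S x). { exists a. split. lra. intros u Hu. replace u with a by lra. auto. }
  destruct (completeness S HB HE) as [v [Hub Hlub]].
  assert (Hav : a <= v) by (apply Hub; destruct HE; unfold S; split; [lra|intros u Hu; replace u with a by lra; auto]).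
  assert (Hvb : v <= b) by (apply Hlub; intros w [Hw _]; lra).
  assert (Hbelow : forall u, a <= u < v -> c < f u).
  { intros u Hu. destruct (Rlt_or_le u v) as [Hlt|]; [|lra].
    assert (~ is_upper_bound S u).
    { intro Hc. specialize (Hlub u Hc). lra. }
    apply Classical_Pred_Type.not_all_ex_not in H. destruct H as [w Hw].
    apply Classical_Prop.imply_to_and in Hw. destruct Hw as [[Hw1 Hw2] Hw3].
    apply Hw2. lra. }
  assert (Hge : c <= f v).
  { destruct (Rle_or_lt c (f v)) as [|Hlt]; auto.
    destruct (Req_dec v a) as [->|Hne]; [lra|].
    destruct (deriv_cont f v (df v) (Hd v) (c - f v)) as [del [Hdel Hc]]; [lra|].
    set (u := Rmax a (v - del/2)).
    assert (a <= u < v). { unfold u. split. apply Rmax_l. apply Rmax_lub_lt; lra. }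
    specialize (Hbelow u H). specialize (Hc u).
    assert (Rabs (u - v) < del).
    { assert (v - del/2 <= u) by (unfold u; apply Rmax_r). rewrite Rabs_left1; lra. }
    specialize (Hc H0). apply Rabs_def2 in Hc. lra. }
  assert (Hle : f v <= c).
  { destruct (Rle_or_lt (f v) c) as [|Hlt]; auto.
    assert (Hvb' : v < b). { destruct (Req_dec v b) as [->|]; [lra|lra]. }
    destruct (deriv_cont f v (df v) (Hd v) (f v - c)) as [del [Hdel Hc]]; [lra|].
    set (w := Rmin b (v + del/2)).
    assert (Sw : S w).
    { assert (Hw1 : w <= v + del/2) by (unfold w; apply Rmin_r).
      assert (Hw2 : w <= b) by (unfold w; apply Rmin_l).
      assert (Hw3 : v < w) by (unfold w; apply Rmin_glb_lt; lra).
      split. lra.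
      intros u Hu. destruct (Rlt_or_le u v). apply Hbelow; lra.
      specialize (Hc u). assert (Rabs (u - v) < del).
      { rewrite Rabs_right by lra. lra. }
      specialize (Hc H0). apply Rabs_def2 in Hc. lra. }
    specialize (Hub w Sw).
    assert (v < w) by (unfold w; apply Rmin_glb_lt; lra). lra. }
  assert (Hfv : f v = c) by lra.
  assert (Hav' : a < v). { destruct (Req_dec a v) as [<-|]; [lra|lra]. }
  exists v. split. lra. split. auto.
  destruct (Rle_or_lt (df v) 0) as [|Hpos]; auto.
  destruct (deriv_pos_side f v (df v) (Hd v) Hpos (v - a)) as [[w [Hw1 Hw2]] _]; [lra|].
  specialize (Hbelow w ltac:(lra)). lra.
Qed.

Lemma crossing_up (f df : R -> R) a b c :
  (forall t, is_derive f t (df t)) -> a < b -> f a < c -> c <= f b ->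
  exists v, a < v <= b /\ f v = c /\ 0 <= df v.
Proof.
  intros Hd Hab Ha Hb.
  destruct (crossing_down (fun x => - f x) (fun x => - df x) a b (- c)) as [v [H1 [H2 H3]]].
  - intro t. exact (is_derive_opp f t (df t) (Hd t)).
  - auto. - lra. - lra.
  - exists v. repeat split; lra.
Qed.

Lemma mono_deriv (f df : R -> R) a b :
  a <= b -> (forall t, a <= t <= b -> is_derive f t (df t)) ->
  (forall t, a <= t <= b -> 0 <= df t) -> f a <= f b.
Proof.
  intros Hab Hd Hpos.
  destruct (Req_dec a b) as [->|Hne]; [lra|].
  destruct (MVT_gen f a b df) as [c [Hc Heq]].
  - intros x Hx. rewrite Rmin_left in Hx by lra. rewrite Rmax_right in Hx by lra. apply Hd; lra.
  - intros x Hx. rewrite Rmin_left in Hx by lra. rewrite Rmax_right in Hx by lra.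
    assert (Hx' := Hd x ltac:(lra)). apply is_derive_Reals in Hx'. apply derivable_continuous_pt. eexists. exact Hx'.
  - rewrite Rmin_left in Hc by lra. rewrite Rmax_right in Hc by lra.
    specialize (Hpos c Hc). nra.
Qed.

Lemma abs_sin_le_pos x : 0 <= x -> Rabs (sin x) <= x.
Proof.
  intro H. pose proof (SIN_bound x). destruct (Rle_or_lt 1 x).
  - apply Rabs_le. lra.
  - destruct (Req_dec x 0) as [->|Hne]. rewrite sin_0, Rabs_R0; lra.
    assert (sin x < x) by (apply sin_lt_x; lra).
    assert (0 <= sin x) by (apply sin_ge_0; pose proof PI2_1; lra).
    rewrite Rabs_right; lra.
Qed.

Lemma abs_sin_le x : Rabs (sin x) <= Rabs x.
Proof.
  destruct (Rle_or_lt 0 x).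
  - rewrite (Rabs_right x) by lra. apply abs_sin_le_pos; lra.
  - replace x with (- (-x)) by ring. rewrite sin_neg, !Rabs_Ropp.
    rewrite (Rabs_left x) by lra. apply abs_sin_le_pos; lra.
Qed.

Lemma cos_near0 u : Rabs u <= 1/2 -> 7/8 <= cos u.
Proof.
  intro H. replace u with (2 * (u/2)) by field. rewrite cos_2a_sin.
  pose proof (abs_sin_le (u/2)). assert (Rabs (u/2) <= 1/4).
  { unfold Rdiv. rewrite Rabs_mult. rewrite (Rabs_right (/2)) by lra. lra. }
  assert (Rabs (sin (u/2)) <= 1/4) by lra.
  assert (sin (u / 2) * sin (u / 2) = Rabs (sin (u/2)) * Rabs (sin (u/2))).
  { rewrite <- Rabs_mult. rewrite Rabs_right; auto. apply Rle_ge. apply Rle_0_sqr. }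
  pose proof (Rabs_pos (sin (u/2))). nra.
Qed.

Lemma cos_nearpi u : - PI <= u <= - PI + 1/2 -> cos u <= - 7/8.
Proof.
  intro H. assert (cos (u + PI) >= 7/8). { apply Rle_ge, cos_near0. rewrite Rabs_right; lra. }
  rewrite neg_cos in H0. lra.
Qed.

Lemma sin_pos_strip th : 0 < th < PI -> 0 < sin th <= 1.
Proof. intro H. split. apply sin_gt_0; lra. apply SIN_bound. Qed.

Section F.
Variables (a E lam : R).
Hypothesis Ha : 0 < a < 1/2.
Hypothesis HE : 0 <= E <= 1.
Hypothesis Hlam : lam <= -1 + a.

Definition Fd (th x : R) : R :=
  2 * a * sin th * cos th * sin x + 2 * a * E * (sin th)^2 * cos x - cos x.

Lemma F_deriv th x : is_derive (fun y => theta_rhs a E lam th y) x (Fd th x).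
Proof. unfold theta_rhs, Fd. auto_derive; auto. ring. Qed.

Lemma F_mvt th x w : exists xi, Rmin x w <= xi <= Rmax x w /\
  theta_rhs a E lam th x - theta_rhs a E lam th w = Fd th xi * (x - w).
Proof.
  destruct (MVT_gen (fun y => theta_rhs a E lam th y) w x (Fd th)) as [xi [H1 H2]].
  - intros; apply F_deriv.
  - intros y _. apply derivable_continuous_pt. eexists. apply is_derive_Reals. apply F_deriv.
  - exists xi. split. rewrite Rmin_comm, Rmax_comm; auto. auto.
Qed.

Lemma bnd_scale k K q m : 0 <= k <= K -> -m <= q <= m -> -(K*m) <= k * q <= K * m.
Proof. intros. assert (0 <= m) by lra. split; nra. Qed.

Lemma bnd_prod u v : -1 <= u <= 1 -> -1 <= v <= 1 -> -1 <= u * v <= 1.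
Proof. intros. split; nra. Qed.

Lemma Fd_bound th x : 0 < th < PI -> Rabs (Fd th x) <= 1 + 4 * a.
Proof.
  intro Hth. unfold Fd. pose proof (sin_pos_strip th Hth).
  pose proof (COS_bound th). pose proof (COS_bound x). pose proof (SIN_bound x).
  pose proof (bnd_prod (cos th) (sin x) ltac:(lra) ltac:(lra)).
  set (s := sin th) in *. set (c := cos th) in *.
  assert (0 <= 2*a*s) by nra. assert (0 <= 2*a*E) by nra.
  assert (0 <= s^2 <= s) by (simpl; nra).
  assert (- s^2 <= s^2 * cos x <= s^2) by (split; nra).
  assert (-(2*a*s) <= 2*a*s*(c * sin x) <= 2*a*s) by (split; nra).
  pose proof (bnd_scale (2*a*E) (2*a) (s^2 * cos x) (s^2) ltac:(split; nra) ltac:(lra)).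
  apply Rabs_le. split; nra.
Qed.

Lemma Fd_near0 th x : 0 < th < PI -> sin th <= 1/8 -> Rabs x <= 1/2 -> Fd th x <= - 1/2.
Proof.
  intros Hth Hs Hx. unfold Fd. pose proof (sin_pos_strip th Hth).
  pose proof (COS_bound th). pose proof (COS_bound x). pose proof (SIN_bound x).
  pose proof (cos_near0 x Hx).
  pose proof (bnd_prod (cos th) (sin x) ltac:(lra) ltac:(lra)).
  set (s := sin th) in *. set (c := cos th) in *.
  assert (0 <= 2*a*s) by nra. assert (0 <= 2*a*E) by nra.
  assert (0 <= s^2 <= s) by (simpl; nra).
  assert (2*a*s*(c * sin x) <= 2*a*s) by nra.
  assert (- s^2 <= s^2 * cos x <= s^2) by (split; nra).
  pose proof (bnd_scale (2*a*E) (2*a) (s^2 * cos x) (s^2) ltac:(split; nra) ltac:(lra)).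
  assert (2*a*s^2 <= 2*a*s) by nra.
  nra.
Qed.

Lemma Fd_nearpi th x : 0 < th < PI -> sin th <= 1/8 -> - PI <= x <= - PI + 1/2 -> 1/2 <= Fd th x.
Proof.
  intros Hth Hs Hx. unfold Fd. pose proof (sin_pos_strip th Hth).
  pose proof (COS_bound th). pose proof (COS_bound x). pose proof (SIN_bound x).
  pose proof (cos_nearpi x Hx).
  pose proof (bnd_prod (cos th) (sin x) ltac:(lra) ltac:(lra)).
  set (s := sin th) in *. set (c := cos th) in *.
  assert (0 <= 2*a*s) by nra. assert (0 <= 2*a*E) by nra.
  assert (0 <= s^2 <= s) by (simpl; nra).
  assert (-(2*a*s) <= 2*a*s*(c * sin x)) by nra.
  assert (- s^2 <= s^2 * cos x <= s^2) by (split; nra).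
  pose proof (bnd_scale (2*a*E) (2*a) (s^2 * cos x) (s^2) ltac:(split; nra) ltac:(lra)).
  assert (2*a*s^2 <= 2*a*s) by nra.
  nra.
Qed.

Lemma F_bound th x : 0 < th < PI -> Rabs (theta_rhs a E lam th x) <= 1 + 4 * a + 2 * Rabs lam.
Proof.
  intro Hth. unfold theta_rhs. pose proof (sin_pos_strip th Hth).
  pose proof (COS_bound th). pose proof (COS_bound x). pose proof (SIN_bound x).
  pose proof (bnd_prod (cos th) (cos x) ltac:(lra) ltac:(lra)).
  set (s := sin th) in *. set (c := cos th) in *.
  assert (0 <= 2*a*s) by nra. assert (0 <= 2*a*E) by nra.
  assert (0 <= s^2 <= s) by (simpl; nra).
  assert (-(2*a*s) <= 2*a*s*(c * cos x) <= 2*a*s) by (split; nra).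
  assert (- s^2 <= s^2 * sin x <= s^2) by (split; nra).
  pose proof (bnd_scale (2*a*E) (2*a) (s^2 * sin x) (s^2) ltac:(split; nra) ltac:(lra)).
  assert (Hl : Rabs (2 * lam * s) <= 2 * Rabs lam).
  { rewrite !Rabs_mult. rewrite (Rabs_right 2) by lra. rewrite (Rabs_right s) by lra.
    pose proof (Rabs_pos lam). nra. }
  assert (2*a*s <= 2*a) by nra. assert (2*a*s^2 <= 2*a) by nra.
  apply Rabs_le. apply Rabs_le_between in Hl. split; nra.
Qed.

Lemma F_lower th x : 0 < th < PI ->
  - sin x - (4 * a + 2 * Rabs lam) * sin th <= theta_rhs a E lam th x.
Proof.
  intro Hth. unfold theta_rhs. pose proof (sin_pos_strip th Hth).
  pose proof (COS_bound th). pose proof (COS_bound x). pose proof (SIN_bound x).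
  pose proof (bnd_prod (cos th) (cos x) ltac:(lra) ltac:(lra)).
  set (s := sin th) in *. set (c := cos th) in *.
  assert (0 <= 2*a*s) by nra. assert (0 <= 2*a*E) by nra.
  assert (0 <= s^2 <= s) by (simpl; nra).
  assert (2*a*s*(c * cos x) <= 2*a*s) by nra.
  assert (- s^2 <= s^2 * sin x <= s^2) by (split; nra).
  pose proof (bnd_scale (2*a*E) (2*a) (s^2 * sin x) (s^2) ltac:(split; nra) ltac:(lra)).
  assert (2*a*s^2 <= 2*a*s) by nra.
  assert (- (2 * Rabs lam * s) <= 2 * lam * s).
  { pose proof (Rabs_pos lam). pose proof (Rle_abs (-lam)) as Hq. rewrite Rabs_Ropp in Hq. nra. }
  nra.
Qed.

Lemma F_neg_top th x : 0 < th < PI -> 0 <= x <= PI/2 -> theta_rhs a E lam th x < 0.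
Proof.
  intros Hth Hx. unfold theta_rhs. pose proof (sin_pos_strip th Hth).
  pose proof (COS_bound th). pose proof (COS_bound x). pose proof (SIN_bound x).
  assert (0 <= sin x) by (apply sin_ge_0; pose proof PI2_1; lra).
  pose proof (bnd_prod (cos th) (cos x) ltac:(lra) ltac:(lra)).
  set (s := sin th) in *. set (c := cos th) in *.
  assert (0 <= 2*a*s) by nra. assert (0 <= 2*a*E) by nra.
  assert (0 <= s^2 <= 1) by (simpl; nra).
  assert (-2*a*s*(c * cos x) <= 2*a*s) by nra.
  assert (0 <= 2*a*sin x) by nra. assert (0 <= E*s^2 <= 1) by (split; nra).
  assert (2*a*E*(s^2 * sin x) <= 2*a*sin x) by nra.
  assert (s*(2*a+2*lam) < 0) by nra. assert (sin x*(2*a-1) <= 0) by nra.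
  nra.
Qed.

Lemma F_neg_bot th x : 0 < th < PI -> -2*PI < x <= - PI -> theta_rhs a E lam th x < 0.
Proof.
  intros Hth Hx. unfold theta_rhs. pose proof (sin_pos_strip th Hth).
  set (w := x + PI).
  assert (Hsx : sin x = - sin w) by (unfold w; rewrite neg_sin; ring).
  assert (Hcx : cos x = - cos w) by (unfold w; rewrite neg_cos; ring).
  assert (sin w <= 0). { unfold w. assert (0 <= sin (-(x+PI))) by (apply sin_ge_0; lra).
     rewrite sin_neg in H0. lra. }
  rewrite Hsx, Hcx.
  pose proof (COS_bound th). pose proof (COS_bound w). pose proof (SIN_bound w).
  pose proof (bnd_prod (cos th) (cos w) ltac:(lra) ltac:(lra)).
  set (s := sin th) in *. set (c := cos th) in *.
  assert (0 <= 2*a*s) by nra. assert (0 <= 2*a*E) by nra.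
  assert (0 <= s^2 <= 1) by (simpl; nra).
  assert (2*a*s*(c * cos w) <= 2*a*s) by nra.
  assert (0 <= -(2*a*sin w)) by nra. assert (0 <= E*s^2 <= 1) by (split; nra).
  assert (-(2*a*E*(s^2 * sin w)) <= - (2*a*sin w)) by nra.
  assert (s*(2*a+2*lam) < 0) by nra. assert (- sin w*(2*a-1) <= 0) by nra.
  nra.
Qed.

End F.

Definition contR (g : R -> R) := forall t, continuity_pt g t.

Lemma cont_ex_RInt g a b : contR g -> ex_RInt g a b.
Proof. intro H. apply (@ex_RInt_continuous R_CompleteNormedModule). intros z _. apply continuity_pt_filterlim. apply H. Qed.

Lemma RInt_deriv g t0 t : contR g -> is_derive (fun x => RInt g t0 x) t (g t).
Proof.
  intro H. apply (@is_derive_RInt R_CompleteNormedModule g (fun x => RInt g t0 x) t0 t).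
  - apply filter_forall. intro b. apply (@RInt_correct R_CompleteNormedModule). apply cont_ex_RInt; auto.
  - apply continuity_pt_filterlim. apply H.
Qed.

Lemma RInt_Chasles_R g a b c : contR g -> RInt g a b + RInt g b c = RInt g a c.
Proof. intro H. apply (RInt_Chasles g a b c); apply cont_ex_RInt; auto. Qed.

Lemma RInt_swap_R g a b : contR g -> RInt g b a = - RInt g a b.
Proof. intro H. rewrite <- (opp_RInt_swap g a b). reflexivity. apply cont_ex_RInt; auto. Qed.

Lemma contR_minus g h : contR g -> contR h -> contR (fun x => g x - h x).
Proof. intros Hg Hh t. apply continuity_pt_minus; auto. Qed.

Lemma RInt_minus_R g h a b : contR g -> contR h ->
  RInt (fun x => g x - h x) a b = RInt g a b - RInt h a b.
Proof.
  intros Hg Hh. apply (RInt_minus g h a b); apply cont_ex_RInt; auto.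
Qed.

Lemma RInt_bound_const g a b M : contR g -> (forall t, Rabs (g t) <= M) ->
  Rabs (RInt g a b) <= M * Rabs (b - a).
Proof.
  intros Hg HM. destruct (Rle_or_lt a b).
  - rewrite (Rabs_right (b - a)) by lra. rewrite Rmult_comm. apply abs_RInt_le_const; auto.
    apply cont_ex_RInt; auto.
  - rewrite <- (Rabs_Ropp (RInt g a b)). rewrite <- RInt_swap_R by auto.
    rewrite (Rabs_left (b - a)) by lra. replace (- (b - a)) with (a - b) by ring.
    rewrite Rmult_comm. apply abs_RInt_le_const; [lra| |auto]. apply cont_ex_RInt; auto.
Qed.

Lemma RInt_mono_abs g h a b : a <= b -> contR g -> contR h ->
  (forall t, a <= t <= b -> Rabs (g t) <= h t) -> Rabs (RInt g a b) <= RInt h a b.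
Proof.
  intros Hab Hg Hh Hb.
  eapply Rle_trans. apply abs_RInt_le; auto. apply cont_ex_RInt; auto.
  apply RInt_le; auto.
  - apply cont_ex_RInt. intro t. apply (continuity_pt_comp g Rabs); [apply Hg | apply Rcontinuity_abs].
  - apply cont_ex_RInt; auto.
  - intros; apply Hb; lra.
Qed.

Lemma RInt_bound_exp g t0 t K L : contR g -> 0 < L -> 0 <= K ->
  (forall s, Rabs (g s) <= K * exp (2 * L * Rabs (s - t0))) ->
  Rabs (RInt g t0 t) <= K * (exp (2 * L * Rabs (t - t0)) - 1) / (2 * L).
Proof.
  intros Hg HL HK Hb. destruct (Rle_or_lt t0 t).
  - set (h := fun s => K * exp (2 * L * (s - t0))).
    assert (Hh : contR h).
    { intro s. unfold h. apply derivable_continuous_pt. eexists. apply is_derive_Reals.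
      auto_derive; auto. }
    eapply Rle_trans. apply (RInt_mono_abs g h); auto.
    intros s Hs. unfold h. rewrite <- (Rabs_right (s - t0)) by lra. apply Hb.
    right. rewrite Rabs_right by lra.
    apply (@is_RInt_unique R_CompleteNormedModule).
    replace (K * (exp (2 * L * (t - t0)) - 1) / (2 * L)) with
      (minus ((fun s => K * exp (2 * L * (s - t0)) / (2 * L)) t) ((fun s => K * exp (2 * L * (s - t0)) / (2 * L)) t0)).
    + apply (@is_RInt_derive R_CompleteNormedModule (fun s => K * exp (2 * L * (s - t0)) / (2 * L)) h t0 t).
      * intros x _. unfold h. auto_derive; auto. unfold Rminus. field. lra.
      * intros x _. apply continuity_pt_filterlim. apply Hh.
    + unfold minus, plus, opp; simpl. replace (t0 - t0) with 0 by ring. rewrite Rmult_0_r, exp_0. field. lra.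
  - rewrite <- Rabs_Ropp. rewrite <- RInt_swap_R by auto.
    set (h := fun s => K * exp (2 * L * (t0 - s))).
    assert (Hh : contR h).
    { intro s. unfold h. apply derivable_continuous_pt. eexists. apply is_derive_Reals.
      auto_derive; auto. }
    eapply Rle_trans. apply (RInt_mono_abs g h); auto. lra.
    intros s Hs. unfold h. replace (t0 - s) with (Rabs (s - t0)). apply Hb.
    rewrite Rabs_left1 by lra. ring.
    right. rewrite Rabs_left by lra.
    apply (@is_RInt_unique R_CompleteNormedModule).
    replace (K * (exp (2 * L * - (t - t0)) - 1) / (2 * L)) with
      (minus ((fun s => - (K * exp (2 * L * (t0 - s)) / (2 * L))) t0) ((fun s => - (K * exp (2 * L * (t0 - s)) / (2 * L))) t)).
    + apply (@is_RInt_derive R_CompleteNormedModule (fun s => - (K * exp (2 * L * (t0 - s)) / (2 * L))) h t t0).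
      * intros x _. auto_derive; auto. unfold h, Rminus. field. lra.
      * intros x _. apply continuity_pt_filterlim. apply Hh.
    + unfold minus, plus, opp; simpl. replace (t0 - t0) with 0 by ring. rewrite Rmult_0_r, exp_0.
      replace (- (t - t0)) with (t0 - t) by ring. field. lra.
Qed.

Lemma le_geom_zero x D : 0 <= x -> (forall k : nat, x <= D * (1/2)^k) -> x = 0.
Proof.
  intros Hx Hk. destruct (Req_dec x 0) as [|Hne]; auto.
  assert (D > 0). { specialize (Hk O). simpl in Hk. lra. }
  destruct (pow_lt_1_zero (1/2) ltac:(rewrite Rabs_right; lra) (x / (2 * D))) as [N HN].
  { apply Rdiv_lt_0_compat; lra. }
  specialize (HN N (le_n _)). specialize (Hk N).
  rewrite Rabs_right in HN. 2: { apply Rle_ge, pow_le; lra. }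
  assert (D * (1/2)^N < D * (x / (2 * D))) by (apply Rmult_lt_compat_l; lra).
  replace (D * (x / (2 * D))) with (x / 2) in H0 by (field; lra). lra.
Qed.

Lemma lim_le_bound (u : nat -> R) (l : R) k B :
  is_lim_seq u l -> (forall m, (k <= m)%nat -> Rabs (u m - u k) <= B) -> Rabs (l - u k) <= B.
Proof.
  intros Hl Hb. apply Rnot_lt_le. intro Hlt.
  apply is_lim_seq_spec in Hl. cbn in Hl.
  destruct (Hl (mkposreal (Rabs (l - u k) - B) ltac:(lra))) as [N HN]. simpl in HN.
  specialize (HN (max N k) (Nat.le_max_l _ _)). specialize (Hb (max N k) (Nat.le_max_r _ _)).
  assert (Rabs (l - u k) <= Rabs (l - u (max N k)) + Rabs (u (max N k) - u k)).
  { replace (l - u k) with ((l - u (max N k)) + (u (max N k) - u k)) by ring. apply Rabs_triang. }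
  rewrite <- Rabs_Ropp in HN. replace (- (u (max N k) - l)) with (l - u (max N k)) in HN by ring.
  lra.
Qed.

Lemma RInt_deriv_c g c t0 t : contR g -> is_derive (fun x => c + RInt g t0 x) t (g t).
Proof.
  intro Hg. assert (H := RInt_deriv g t0 t Hg). apply is_derive_Reals in H. apply is_derive_Reals.
  replace (g t) with (0 + g t) by ring.
  apply (derivable_pt_lim_plus (fun _ => c) (fun x => RInt g t0 x) t 0 (g t)).
  apply derivable_pt_lim_const. exact H.
Qed.

Lemma deriv_contpt f t l : is_derive f t l -> continuity_pt f t.
Proof. intro H. apply is_derive_Reals in H. apply derivable_continuous_pt. exists l. exact H. Qed.

Section IVP.
Variables (f : R -> R -> R) (L M t0 y0 : R).
Hypothesis HL : 0 < L.
Hypothesis HM : forall t x, Rabs (f t x) <= M.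
Hypothesis HLip : forall t x w, Rabs (f t x - f t w) <= L * Rabs (x - w).
Hypothesis Hcont : forall y : R -> R, contR y -> contR (fun s => f s (y s)).

Fixpoint pic (k : nat) : R -> R :=
  match k with
  | O => fun _ => y0
  | S k => fun t => y0 + RInt (fun s => f s (pic k s)) t0 t
  end.

Lemma pic_cont k : contR (pic k).
Proof.
  induction k; intro t; simpl.
  - apply continuity_pt_const. intros x y; auto.
  - apply (deriv_contpt _ _ _ (RInt_deriv_c _ _ _ _ (Hcont _ IHk))).
Qed.

End IVP.

Section IVP2.
Variables (f : R -> R -> R) (L M t0 y0 : R).
Hypothesis HL : 0 < L.
Hypothesis HM : forall t x, Rabs (f t x) <= M.
Hypothesis HLip : forall t x w, Rabs (f t x - f t w) <= L * Rabs (x - w).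
Hypothesis Hcont : forall y : R -> R, contR y -> contR (fun s => f s (y s)).

Let P := pic f t0 y0.
Let C := M / (2 * L).
Let ee t := exp (2 * L * Rabs (t - t0)).

Lemma M_nonneg : 0 <= M.
Proof. specialize (HM 0 0). pose proof (Rabs_pos (f 0 0)). lra. Qed.

Lemma ee_pos t : 0 < ee t.
Proof. apply exp_pos. Qed.

Lemma pcont k : contR (P k).
Proof. apply pic_cont; auto. Qed.

Lemma pic_step k t : Rabs (P (S k) t - P k t) <= C * (1/2)^k * ee t.
Proof.
  pose proof M_nonneg. assert (HC : 0 <= C) by (unfold C; apply Rmult_le_pos; [lra| left; apply Rinv_0_lt_compat; lra]).
  revert t. induction k; intro t.
  - unfold P; simpl. assert (Hr : forall r : R, y0 + r - y0 = r) by (intro; ring). rewrite Hr.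
    eapply Rle_trans. apply RInt_bound_const. apply (Hcont (fun _ => y0)). intro; apply continuity_pt_const; intros ? ?; auto.
    intro; apply HM.
    pose proof (exp_ineq1_le (2 * L * Rabs (t - t0))). unfold ee, C. rewrite Rmult_1_r.
    pose proof (Rabs_pos (t - t0)).
    assert (M * Rabs (t - t0) = M / (2 * L) * (2 * L * Rabs (t - t0))) by (field; lra).
    rewrite H2. apply Rmult_le_compat_l. apply Rmult_le_pos; [lra| left; apply Rinv_0_lt_compat; lra]. lra.
  - change (P (S (S k)) t) with (y0 + RInt (fun s => f s (P (S k) s)) t0 t).
    change (P (S k) t) with (y0 + RInt (fun s => f s (P k s)) t0 t).
    replace (y0 + RInt (fun s => f s (P (S k) s)) t0 t - (y0 + RInt (fun s => f s (P k s)) t0 t))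
      with (RInt (fun s => f s (P (S k) s)) t0 t - RInt (fun s => f s (P k s)) t0 t) by ring.
    rewrite <- RInt_minus_R by (apply Hcont, pcont).
    eapply Rle_trans. apply (RInt_bound_exp _ t0 t (L * (C * (1/2)^k)) L).
    + apply contR_minus; apply Hcont, pcont.
    + auto.
    + apply Rmult_le_pos; [lra|]. apply Rmult_le_pos; auto. apply pow_le; lra.
    + intro s. eapply Rle_trans. apply HLip. rewrite Rmult_assoc. apply Rmult_le_compat_l; [lra|]. apply IHk.
    + pose proof (exp_pos (2 * L * Rabs (t - t0))). unfold ee. simpl.
      assert (0 <= C * (1/2)^k) by (apply Rmult_le_pos; auto; apply pow_le; lra).
      apply Rmult_le_reg_r with (2 * L); [lra|].
      replace (L * (C * (1 / 2) ^ k) * (exp (2 * L * Rabs (t - t0)) - 1) / (2 * L) * (2 * L))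
        with (L * (C * (1 / 2) ^ k) * (exp (2 * L * Rabs (t - t0)) - 1)) by (field; lra).
      nra.
Qed.

Lemma pic_cauchy k m t : Rabs (P (k + m) t - P k t) <= 2 * C * (1/2)^k * ee t - 2 * C * (1/2)^(k+m) * ee t.
Proof.
  induction m.
  - rewrite Nat.add_0_r. rewrite Rminus_diag, Rabs_R0. lra.
  - replace (k + S m)%nat with (S (k + m)) by lia.
    eapply Rle_trans. 
    replace (P (S (k + m)) t - P k t) with ((P (S (k + m)) t - P (k+m)%nat t) + (P (k + m)%nat t - P k t)) by ring.
    apply Rabs_triang. pose proof (pic_step (k + m) t).
    replace ((1/2)^(S (k+m))) with ((1/2)*(1/2)^(k+m)) by (simpl; ring). lra.
Qed.

Lemma pic_cauchy' k m t : (k <= m)%nat -> Rabs (P m t - P k t) <= 2 * C * (1/2)^k * ee t.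
Proof.
  intro H. replace m with (k + (m - k))%nat by lia. eapply Rle_trans. apply pic_cauchy.
  pose proof M_nonneg. assert (0 <= C) by (unfold C; apply Rmult_le_pos; [lra| left; apply Rinv_0_lt_compat; lra]).
  assert (0 <= (1/2)^(k + (m-k))) by (apply pow_le; lra). pose proof (ee_pos t).
  assert (0 <= 2 * C * (1 / 2) ^ (k + (m - k)) * ee t) by (apply Rmult_le_pos; [apply Rmult_le_pos|]; lra).
  lra.
Qed.

Definition ylim t : R := real (Lim_seq (fun k => P k t)).

Lemma ylim_cv t : is_lim_seq (fun k => P k t) (ylim t).
Proof.
  apply Lim_seq_correct'. apply ex_lim_seq_cauchy_corr. intro eps.
  pose proof M_nonneg. assert (0 <= C) by (unfold C; apply Rmult_le_pos; [lra| left; apply Rinv_0_lt_compat; lra]).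
  pose proof (ee_pos t).
  destruct (pow_lt_1_zero (1/2) ltac:(rewrite Rabs_right; lra) (eps / (4 * C * ee t + 1))) as [N HN].
  { apply Rdiv_lt_0_compat. apply cond_pos. nra. }
  exists N. intros n m Hn Hm.
  specialize (HN N (le_n _)). rewrite Rabs_right in HN by (apply Rle_ge, pow_le; lra).
  pose proof (pic_cauchy' N n t Hn). pose proof (pic_cauchy' N m t Hm).
  assert (Rabs (P n t - P m t) <= 4 * C * (1/2)^N * ee t).
  { replace (P n t - P m t) with ((P n t - P N t) - (P m t - P N t)) by ring.
    eapply Rle_trans. apply Rabs_triang. rewrite Rabs_Ropp. lra. }
  assert (4 * C * (1/2)^N * ee t <= (4 * C * ee t + 1) * (1/2)^N).
  { assert (0 <= (1/2)^N) by (apply pow_le; lra). nra. }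
  assert ((4 * C * ee t + 1) * (1/2)^N < eps).
  { apply Rmult_lt_reg_r with (/ (4 * C * ee t + 1)). apply Rinv_0_lt_compat; nra.
    replace ((4 * C * ee t + 1) * (1 / 2) ^ N * / (4 * C * ee t + 1)) with ((1/2)^N) by (field; nra).
    exact HN. }
  lra.
Qed.

Lemma ylim_bound k t : Rabs (ylim t - P k t) <= 2 * C * (1/2)^k * ee t.
Proof.
  apply (lim_le_bound (fun k => P k t)). apply ylim_cv. intros m Hm. apply pic_cauchy'. auto.
Qed.

Lemma pic_lip k t u : Rabs (P k t - P k u) <= M * Rabs (t - u).
Proof.
  pose proof M_nonneg. destruct k.
  - unfold P; simpl. rewrite Rminus_diag, Rabs_R0. apply Rmult_le_pos; auto. apply Rabs_pos.
  - change (P (S k) t) with (y0 + RInt (fun s => f s (P k s)) t0 t).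
    change (P (S k) u) with (y0 + RInt (fun s => f s (P k s)) t0 u).
    rewrite <- (RInt_Chasles_R (fun s => f s (P k s)) t0 u t) by (apply Hcont, pcont).
    assert (Hr : forall r1 r2 : R, y0 + (r1 + r2) - (y0 + r1) = r2) by (intros; ring). rewrite Hr.
    apply RInt_bound_const. apply Hcont, pcont. intro; apply HM.
Qed.

Lemma ylim_lip t u : Rabs (ylim t - ylim u) <= M * Rabs (t - u).
Proof.
  pose proof M_nonneg. assert (0 <= C) by (unfold C; apply Rmult_le_pos; [lra| left; apply Rinv_0_lt_compat; lra]).
  set (x := Rmax 0 (Rabs (ylim t - ylim u) - M * Rabs (t - u))).
  assert (Hx0 : x = 0).
  { apply (le_geom_zero x (2 * C * ee t + 2 * C * ee u)). apply Rmax_l.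
    intro k. apply Rmax_lub. pose proof (ee_pos t). pose proof (ee_pos u).
    assert (0 <= (1/2)^k) by (apply pow_le; lra).
    assert (0 <= C*ee t) by (apply Rmult_le_pos; lra). assert (0 <= C*ee u) by (apply Rmult_le_pos; lra).
    apply Rmult_le_pos; lra.
    pose proof (ylim_bound k t). pose proof (ylim_bound k u). pose proof (pic_lip k t u).
    assert (Rabs (ylim t - ylim u) <= Rabs (ylim t - P k t) + Rabs (P k t - P k u) + Rabs (ylim u - P k u)).
    { replace (ylim t - ylim u) with ((ylim t - P k t) + (P k t - P k u) - (ylim u - P k u)) by ring.
      eapply Rle_trans. apply Rabs_triang. rewrite Rabs_Ropp.
      apply Rplus_le_compat_r. apply Rabs_triang. }
    lra. }
  pose proof (Rmax_r 0 (Rabs (ylim t - ylim u) - M * Rabs (t - u))) as Hm. fold x in Hm. lra.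
Qed.

Lemma ylim_cont : contR ylim.
Proof.
  intro t. pose proof M_nonneg.
  intros eps Heps. exists (eps / (M + 1)). split.
  apply Rdiv_lt_0_compat; lra.
  intros u [_ Hu]. simpl in *. unfold R_dist in *.
  eapply Rle_lt_trans. apply ylim_lip.
  apply Rle_lt_trans with ((M + 1) * Rabs (u - t)). apply Rmult_le_compat_r. apply Rabs_pos. lra.
  apply Rmult_lt_reg_r with (/ (M + 1)). apply Rinv_0_lt_compat; lra.
  replace ((M + 1) * Rabs (u - t) * / (M + 1)) with (Rabs (u - t)) by (field; lra). exact Hu.
Qed.

Lemma ylim_int t : ylim t = y0 + RInt (fun s => f s (ylim s)) t0 t.
Proof.
  pose proof M_nonneg. assert (HC : 0 <= C) by (unfold C; apply Rmult_le_pos; [lra| left; apply Rinv_0_lt_compat; lra]).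
  set (G := ylim t - y0 - RInt (fun s => f s (ylim s)) t0 t).
  assert (Rabs G = 0).
  { apply (le_geom_zero _ (2 * C * ee t)). apply Rabs_pos. intro k.
    pose proof (ylim_bound (S k) t).
    change (P (S k) t) with (y0 + RInt (fun s => f s (P k s)) t0 t) in H0.
    assert (Hi : Rabs (RInt (fun s => f s (P k s)) t0 t - RInt (fun s => f s (ylim s)) t0 t)
             <= L * (2 * C * (1/2)^k) * (ee t - 1) / (2 * L)).
    { rewrite <- RInt_minus_R by (apply Hcont; first [apply pcont|apply ylim_cont]).
      apply RInt_bound_exp. apply contR_minus; apply Hcont; [apply pcont|apply ylim_cont].
      auto. apply Rmult_le_pos; [lra|]. apply Rmult_le_pos; [lra|]. apply pow_le; lra.
      intro s. eapply Rle_trans. apply HLip. rewrite Rabs_minus_sym. rewrite Rmult_assoc.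
      apply Rmult_le_compat_l; [lra|]. apply ylim_bound. }
    replace (L * (2 * C * (1 / 2) ^ k) * (ee t - 1) / (2 * L)) with (C * (1/2)^k * (ee t - 1)) in Hi by (field; lra).
    assert (Rabs G <= Rabs (ylim t - (y0 + RInt (fun s => f s (P k s)) t0 t)) +
       Rabs (RInt (fun s => f s (P k s)) t0 t - RInt (fun s => f s (ylim s)) t0 t)).
    { unfold G. replace (ylim t - y0 - RInt (fun s => f s (ylim s)) t0 t) with
        ((ylim t - (y0 + RInt (fun s => f s (P k s)) t0 t)) + (RInt (fun s => f s (P k s)) t0 t - RInt (fun s => f s (ylim s)) t0 t)) by ring.
      apply Rabs_triang. }
    simpl pow in H0. pose proof (ee_pos t). assert (0 <= (1/2)^k) by (apply pow_le; lra).
    assert (0 <= C * (1/2)^k) by (apply Rmult_le_pos; lra).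
    nra. }
  apply Rabs_eq_0 in H0. unfold G in H0. lra.
Qed.

Theorem ivp_exists : exists y, y t0 = y0 /\ contR y /\ forall t, is_derive y t (f t (y t)).
Proof.
  exists ylim. split; [|split].
  - rewrite ylim_int. rewrite RInt_point. unfold zero; simpl. ring.
  - apply ylim_cont.
  - intro t. apply (@is_derive_ext R_AbsRing R_NormedModule (fun x => y0 + RInt (fun s => f s (ylim s)) t0 x) ylim t (f t (ylim t))).
    + intro x. symmetry. apply ylim_int.
    + apply (RInt_deriv_c (fun s => f s (ylim s))). apply Hcont, ylim_cont.
Qed.

End IVP2.

Lemma lim_pinf_spec (f : R -> R) (q : R) :
  filterlim f (Rbar_locally p_infty) (locally q) <->
  forall eps, 0 < eps -> exists T, forall t, T < t -> Rabs (f t - q) < eps.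
Proof.
  split.
  - intros H eps Heps. assert (H' : is_lim f p_infty q) by exact H.
    apply is_lim_spec in H'. destruct (H' (mkposreal eps Heps)) as [T HT]. exists T. exact HT.
  - intro H. change (is_lim f p_infty q). apply is_lim_spec. intro eps.
    destruct (H eps (cond_pos eps)) as [T HT]. exists T. exact HT.
Qed.

Lemma lim_minf_spec (f : R -> R) (q : R) :
  filterlim f (Rbar_locally m_infty) (locally q) <->
  forall eps, 0 < eps -> exists T, forall t, t < T -> Rabs (f t - q) < eps.
Proof.
  split.
  - intros H eps Heps. assert (H' : is_lim f m_infty q) by exact H.
    apply is_lim_spec in H'. destruct (H' (mkposreal eps Heps)) as [T HT]. exists T. exact HT.
  - intro H. change (is_lim f m_infty q). apply is_lim_spec. intro eps.
    destruct (H eps (cond_pos eps)) as [T HT]. exists T. exact HT.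
Qed.

Lemma rhs_cont a E lam u v : contR u -> contR v -> contR (fun s => theta_rhs a E lam (u s) (v s)).
Proof.
  intros Hu Hv t. unfold theta_rhs.
  assert (Hsu : continuity_pt (fun s => sin (u s)) t) by (apply (continuity_pt_comp u sin); [apply Hu|apply continuity_sin]).
  assert (Hcu : continuity_pt (fun s => cos (u s)) t) by (apply (continuity_pt_comp u cos); [apply Hu|apply continuity_cos]).
  assert (Hsv : continuity_pt (fun s => sin (v s)) t) by (apply (continuity_pt_comp v sin); [apply Hv|apply continuity_sin]).
  assert (Hcv : continuity_pt (fun s => cos (v s)) t) by (apply (continuity_pt_comp v cos); [apply Hv|apply continuity_cos]).
  assert (Hc : forall c, continuity_pt (fun _ : R => c) t) by (intro c; apply continuity_pt_const; intros ? ?; auto).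
  repeat (first [ apply continuity_pt_minus | apply continuity_pt_plus | apply continuity_pt_mult
                | apply Hsu | apply Hcu | apply Hsv | apply Hcv | apply Hc | apply continuity_pt_opp]).
Qed.

Definition phi (x : R) := (1 - cos x) / sin x.

Lemma phi_cos x : 0 < x < PI -> cos x * (1 + (phi x)^2) = 1 - (phi x)^2.
Proof.
  intro Hx. pose proof (sin_pos_strip x Hx). pose proof (sin2 x). unfold Rsqr in H0.
  assert (cos x < 1).
  { pose proof (COS_bound x). destruct (Req_dec (cos x) 1); [|lra].
    rewrite H2 in H0. nra. }
  set (p := phi x). assert (Hps : p * sin x = 1 - cos x) by (unfold p, phi; field; lra).
  set (s := sin x) in *. set (c := cos x) in *.
  assert (s <> 0) by lra.
  apply Rmult_eq_reg_r with (s^2). 2: { apply pow_nonzero; auto. }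
  assert (E1 : c * (1 + p ^ 2) * s ^ 2 = c * (s*s + (p*s)^2)) by ring.
  assert (E2 : (1 - p ^ 2) * s ^ 2 = s*s - (p*s)^2) by ring.
  rewrite E1, E2, Hps, H0. ring.
Qed.

Lemma phi_inj x y : 0 < x < PI -> 0 < y < PI -> phi x = phi y -> x = y.
Proof.
  intros Hx Hy Hp. apply cos_inj; try lra.
  pose proof (phi_cos x Hx). pose proof (phi_cos y Hy). rewrite Hp in H.
  assert (0 < 1 + phi y ^ 2) by (pose proof (pow2_ge_0 (phi y)); lra).
  apply Rmult_eq_reg_r with (1 + phi y ^2); lra.
Qed.

Lemma phi_pos x : 0 < x < PI -> 0 < phi x.
Proof.
  intro Hx. pose proof (sin_pos_strip x Hx). unfold phi.
  assert (cos x < 1).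
  { pose proof (COS_bound x). destruct (Req_dec (cos x) 1); [|lra].
    pose proof (sin2 x). unfold Rsqr in H2. rewrite H1 in H2. nra. }
  apply Rdiv_lt_0_compat; lra.
Qed.

Definition theta_sol (th : R -> R) := forall t, 0 < th t < PI /\ is_derive th t (sin (th t)).

Lemma const_deriv0 (g : R -> R) : (forall t, is_derive g t 0) -> forall t u, g t = g u.
Proof.
  intros H.
  assert (forall t u, t <= u -> g t = g u).
  { intros t u Htu. apply Rle_antisym.
    - apply (mono_deriv g (fun _ => 0)). exact Htu. intros; apply H. intros; simpl; lra.
    - assert (- g t <= - g u); [|lra].
      apply (mono_deriv (fun x => - g x) (fun _ => - 0)). exact Htu.
      intros; exact (is_derive_opp g t0 0 (H t0)). intros; simpl; lra. }
  intros t u. destruct (Rle_or_lt t u). auto. symmetry. apply H0. lra.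
Qed.

Lemma phi_exp th : theta_sol th -> forall t, phi (th t) = phi (th 0) * exp t.
Proof.
  intros Hth.
  set (g := fun t => phi (th t) * exp (- t)).
  assert (Hg : forall t, is_derive g t 0).
  { intro t. destruct (Hth t) as [Hr Hd]. pose proof (sin_pos_strip _ Hr).
    apply is_derive_Reals in Hd.
    assert (Hp : derivable_pt_lim phi (th t) ((1 - cos (th t)) / (sin (th t))^2)).
    { apply is_derive_Reals. unfold phi. auto_derive. lra.
      pose proof (sin2 (th t)). unfold Rsqr in H0.
      transitivity ((sin (th t) * sin (th t) - (1 - cos (th t)) * cos (th t)) / (sin (th t) * sin (th t))).
      field; lra.
      replace (sin (th t) * sin (th t) - (1 - cos (th t)) * cos (th t)) with (1 - cos (th t)) by (rewrite H0; ring).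
      field; lra. }
    assert (Hc := derivable_pt_lim_comp th phi t _ _ Hd Hp).
    assert (He : derivable_pt_lim (fun t => exp (- t)) t (- exp (- t))).
    { apply is_derive_Reals. auto_derive; auto. ring. }
    assert (Hm := derivable_pt_lim_mult _ _ t _ _ Hc He).
    apply is_derive_Reals. unfold g.
    replace 0 with ((1 - cos (th t)) / sin (th t) ^ 2 * sin (th t) * exp (- t) + phi (th t) * - exp (- t)).
    exact Hm. unfold phi. field. lra. }
  intro t. assert (Hgt := const_deriv0 g Hg t 0). unfold g in Hgt.
  rewrite Ropp_0, exp_0, Rmult_1_r in Hgt. rewrite <- Hgt.
  rewrite Rmult_assoc, <- exp_plus. replace (- t + t) with 0 by ring. rewrite exp_0. ring.
Qed.

Lemma theta_align th1 th2 : theta_sol th1 -> theta_sol th2 ->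
  exists c, forall t, th2 t = th1 (t + c).
Proof.
  intros H1 H2.
  pose proof (phi_pos _ (proj1 (H1 0))). pose proof (phi_pos _ (proj1 (H2 0))).
  exists (ln (phi (th2 0) / phi (th1 0))). intro t.
  apply phi_inj. apply H2. apply H1.
  rewrite (phi_exp th2 H2 t), (phi_exp th1 H1). rewrite exp_plus, exp_ln.
  field. lra. apply Rdiv_lt_0_compat; lra.
Qed.

Lemma deriv_sq_exp (e : R -> R) de k t : is_derive e t de ->
  is_derive (fun t => (e t)^2 * exp (k * t)) t ((2 * e t * de + k * (e t)^2) * exp (k * t)).
Proof.
  intro H. apply is_derive_Reals in H. apply is_derive_Reals.
  assert (H2 : derivable_pt_lim (fun t => (e t)^2) t (2 * e t * de)).
  { replace (2 * e t * de) with (de * e t + e t * de) by ring.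
    apply (derivable_pt_lim_mult e (fun t => e t * 1) t de (de * 1)) in H.
    2: { replace (de * 1) with (de * 1 + e t * 0) by ring. apply derivable_pt_lim_mult. exact H. apply derivable_pt_lim_const. }
    replace (de * e t + e t * de) with (de * (e t * 1) + e t * (de * 1)) by ring. exact H. }
  assert (He : derivable_pt_lim (fun t => exp (k * t)) t (k * exp (k * t))).
  { apply is_derive_Reals. auto_derive; auto. ring. }
  replace ((2 * e t * de + k * e t ^ 2) * exp (k * t)) with (2 * e t * de * exp (k * t) + e t ^ 2 * (k * exp (k * t))) by ring.
  apply (derivable_pt_lim_mult (fun t => (e t)^2) (fun t => exp (k * t))); auto.
Qed.

Section Sol.
Variables (a E lam : R) (th : R -> R).
Hypothesis Ha : 0 < a < 1/2.
Hypothesis HE : 0 <= E <= 1.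
Hypothesis Hlam : lam <= -1 + a.
Hypothesis Hth : theta_sol th.

Definition sol (Y : R -> R) := forall t, is_derive Y t (theta_rhs a E lam (th t) (Y t)).
Let LL := 1 + 4 * a.

Lemma rhs_lip t x w : Rabs (theta_rhs a E lam (th t) x - theta_rhs a E lam (th t) w) <= LL * Rabs (x - w).
Proof.
  destruct (F_mvt a E lam (th t) x w) as [xi [_ Hxi]]. rewrite Hxi. rewrite Rabs_mult.
  apply Rmult_le_compat_r. apply Rabs_pos. apply Fd_bound; auto. apply Hth.
Qed.

Lemma sol_cont Y : sol Y -> contR Y.
Proof. intros H t. apply (deriv_contpt _ _ _ (H t)). Qed.

Lemma th_cont : contR th.
Proof. intro t. apply (deriv_contpt _ _ _ (proj2 (Hth t))). Qed.

Lemma gron_fwd Y1 Y2 t0 t : sol Y1 -> sol Y2 -> t0 <= t ->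
  (Y1 t - Y2 t)^2 <= (Y1 t0 - Y2 t0)^2 * exp (2 * LL * (t - t0)).
Proof.
  intros H1 H2 Ht.
  set (e := fun s => Y1 s - Y2 s).
  set (de := fun s => theta_rhs a E lam (th s) (Y1 s) - theta_rhs a E lam (th s) (Y2 s)).
  assert (Hd : forall s, is_derive e s (de s)).
  { intro s. apply is_derive_Reals. apply derivable_pt_lim_minus; apply is_derive_Reals; auto. }
  assert (Hm : - ((e t0)^2 * exp (- (2 * LL) * t0)) <= - ((e t)^2 * exp (- (2*LL) * t))).
  { apply (mono_deriv (fun s => - ((e s)^2 * exp (- (2 * LL) * s)))
       (fun s => - ((2 * e s * de s + - (2 * LL) * (e s)^2) * exp (- (2 * LL) * s)))); auto.
    - intros s _. apply (is_derive_opp (fun s => (e s)^2 * exp (- (2 * LL) * s))). apply deriv_sq_exp. auto.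
    - intros s _. cbv beta. pose proof (exp_pos (- (2 * LL) * s)).
      assert (e s * de s <= LL * (e s)^2).
      { pose proof (rhs_lip s (Y1 s) (Y2 s)). fold (de s) in H0. fold (e s) in H0.
        pose proof (Rle_abs (e s * de s)). rewrite Rabs_mult in H3.
        assert (Rabs (e s) * Rabs (de s) <= Rabs (e s) * (LL * Rabs (e s))).
        { apply Rmult_le_compat_l. apply Rabs_pos. auto. }
        assert (Rabs (e s) * Rabs (e s) = (e s)^2). { rewrite <- Rabs_mult. simpl. rewrite Rmult_1_r. apply Rabs_right. apply Rle_ge, Rle_0_sqr. }
        rewrite (Rmult_comm LL), <- Rmult_assoc, H5 in H4. lra. }
      nra. }
  assert (Hx : exp (- (2 * LL) * t) * exp (2 * LL * (t - t0)) = exp (- (2 * LL) * t0)).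
  { rewrite <- exp_plus. f_equal. ring. }
  pose proof (exp_pos (- (2 * LL) * t)). pose proof (exp_pos (2 * LL * (t - t0))).
  unfold e in *. 
  apply Rmult_le_reg_r with (exp (- (2 * LL) * t)); auto.
  rewrite Rmult_assoc, (Rmult_comm (exp (2 * LL * (t - t0)))), Hx. lra.
Qed.

Lemma gron_bwd Y1 Y2 t0 t : sol Y1 -> sol Y2 -> t <= t0 ->
  (Y1 t - Y2 t)^2 <= (Y1 t0 - Y2 t0)^2 * exp (2 * LL * (t0 - t)).
Proof.
  intros H1 H2 Ht.
  set (e := fun s => Y1 s - Y2 s).
  set (de := fun s => theta_rhs a E lam (th s) (Y1 s) - theta_rhs a E lam (th s) (Y2 s)).
  assert (Hd : forall s, is_derive e s (de s)).
  { intro s. apply is_derive_Reals. apply derivable_pt_lim_minus; apply is_derive_Reals; auto. }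
  assert (Hm : (e t)^2 * exp ((2 * LL) * t) <= (e t0)^2 * exp ((2*LL) * t0)).
  { apply (mono_deriv (fun s => (e s)^2 * exp ((2 * LL) * s))
       (fun s => (2 * e s * de s + (2 * LL) * (e s)^2) * exp ((2 * LL) * s))); auto.
    - intros s _. apply deriv_sq_exp. auto.
    - intros s _. cbv beta. pose proof (exp_pos ((2 * LL) * s)).
      assert (- (LL * (e s)^2) <= e s * de s).
      { pose proof (rhs_lip s (Y1 s) (Y2 s)). fold (de s) in H0. fold (e s) in H0.
        pose proof (Rle_abs (- (e s * de s))). rewrite Rabs_Ropp, Rabs_mult in H3.
        assert (Rabs (e s) * Rabs (de s) <= Rabs (e s) * (LL * Rabs (e s))).
        { apply Rmult_le_compat_l. apply Rabs_pos. auto. }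
        assert (Rabs (e s) * Rabs (e s) = (e s)^2). { rewrite <- Rabs_mult. simpl. rewrite Rmult_1_r. apply Rabs_right. apply Rle_ge, Rle_0_sqr. }
        rewrite (Rmult_comm LL), <- Rmult_assoc, H5 in H4. lra. }
      nra. }
  assert (Hx : exp ((2 * LL) * t) * exp (2 * LL * (t0 - t)) = exp ((2 * LL) * t0)).
  { rewrite <- exp_plus. f_equal. ring. }
  pose proof (exp_pos ((2 * LL) * t)). pose proof (exp_pos (2 * LL * (t0 - t))).
  unfold e in *.
  apply Rmult_le_reg_r with (exp ((2 * LL) * t)); auto.
  assert (Hx2 : (Y1 t0 - Y2 t0)^2 * exp (2*LL*(t0-t)) * exp (2*LL*t) = (Y1 t0 - Y2 t0)^2 * exp (2*LL*t0)) by (rewrite <- Hx; ring).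
  rewrite Hx2. lra.
Qed.

Lemma inv_band Y t0 T d : sol Y -> 0 < d <= 1/2 ->
  (forall t, t <= T -> (4 * a + 2 * Rabs lam) * sin (th t) < sin d) ->
  t0 <= T -> Rabs (Y t0) < d -> forall t, t0 <= t <= T -> Rabs (Y t) < d.
Proof.
  intros HY Hd Hs HT H0 t Ht.
  pose proof PI2_1.
  apply Rabs_lt_between. apply Rabs_lt_between in H0.
  split.
  - destruct (Rlt_or_le (-d) (Y t)) as [|Hle]; auto. exfalso.
    destruct (Req_dec t t0) as [->|Hne]; [lra|].
    destruct (crossing_down Y (fun s => theta_rhs a E lam (th s) (Y s)) t0 t (-d)) as [v [Hv1 [Hv2 Hv3]]]; auto; try lra.
    rewrite Hv2 in Hv3.
    pose proof (F_lower a E lam Ha HE (th v) (-d) (proj1 (Hth v))).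
    rewrite sin_neg in H1. specialize (Hs v ltac:(lra)). lra.
  - destruct (Rlt_or_le (Y t) d) as [|Hle]; auto. exfalso.
    destruct (Req_dec t t0) as [->|Hne]; [lra|].
    destruct (crossing_up Y (fun s => theta_rhs a E lam (th s) (Y s)) t0 t d) as [v [Hv1 [Hv2 Hv3]]]; auto; try lra.
    rewrite Hv2 in Hv3.
    pose proof (F_neg_top a E lam Ha HE Hlam (th v) d (proj1 (Hth v)) ltac:(lra)). lra.
Qed.

Lemma contract Y1 Y2 t0 T : sol Y1 -> sol Y2 -> (forall t, t <= T -> sin (th t) <= 1/8) ->
  (forall t, t0 <= t <= T -> Rabs (Y1 t) <= 1/2 /\ Rabs (Y2 t) <= 1/2) -> t0 <= T ->
  (Y1 T - Y2 T)^2 * exp T <= (Y1 t0 - Y2 t0)^2 * exp t0.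
Proof.
  intros H1 H2 Hs Hb HT.
  set (e := fun s => Y1 s - Y2 s).
  set (de := fun s => theta_rhs a E lam (th s) (Y1 s) - theta_rhs a E lam (th s) (Y2 s)).
  assert (Hd : forall s, is_derive e s (de s)).
  { intro s. apply is_derive_Reals. apply derivable_pt_lim_minus; apply is_derive_Reals; auto. }
  assert (Hm : - ((e t0)^2 * exp (1 * t0)) <= - ((e T)^2 * exp (1 * T))).
  { apply (mono_deriv (fun s => - ((e s)^2 * exp (1 * s)))
       (fun s => - ((2 * e s * de s + 1 * (e s)^2) * exp (1 * s)))); auto.
    - intros s _. apply (is_derive_opp (fun s => (e s)^2 * exp (1 * s))). apply deriv_sq_exp. auto.
    - intros s Hs'. cbv beta. pose proof (exp_pos (1 * s)).
      destruct (F_mvt a E lam (th s) (Y1 s) (Y2 s)) as [xi [Hxi Heq]].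
      destruct (Hb s Hs') as [B1 B2].
      assert (Rabs xi <= 1/2).
      { apply Rabs_le. apply Rabs_le_between in B1. apply Rabs_le_between in B2.
        pose proof (Rmin_l (Y1 s) (Y2 s)). pose proof (Rmin_r (Y1 s) (Y2 s)).
        pose proof (Rmax_l (Y1 s) (Y2 s)). pose proof (Rmax_r (Y1 s) (Y2 s)).
        destruct (Rle_or_lt (Y1 s) (Y2 s)).
        rewrite Rmin_left in Hxi by lra. rewrite Rmax_right in Hxi by lra. lra.
        rewrite Rmin_right in Hxi by lra. rewrite Rmax_left in Hxi by lra. lra. }
      pose proof (Fd_near0 a E Ha HE (th s) xi (proj1 (Hth s)) (Hs s ltac:(lra)) H0).
      fold (de s) in Heq. fold (e s) in Heq. rewrite Heq.
      assert (0 <= (e s)^2) by (apply pow2_ge_0).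
      assert (Fd a E (th s) xi * e s * e s <= - (1/2) * (e s)^2) by (simpl; nra).
      nra. }
  rewrite !Rmult_1_l in Hm. unfold e in Hm. lra.
Qed.

End Sol.

Lemma sin_small_from_lim0 (th : R -> R) : theta_sol th ->
  filterlim th (Rbar_locally m_infty) (locally 0) ->
  forall eta, 0 < eta -> exists T, forall t, t <= T -> sin (th t) < eta.
Proof.
  intros Hth Hl eta He. pose proof (proj1 (lim_minf_spec th 0) Hl) as Hl'. destruct (Hl' eta He) as [T HT].
  exists (T - 1). intros t Ht. specialize (HT t ltac:(lra)).
  destruct (Hth t) as [Hr _]. rewrite Rminus_0_r, Rabs_right in HT by lra.
  assert (sin (th t) < th t) by (apply sin_lt_x; lra). lra.
Qed.

Section Exist.
Variables (a E lam : R) (th : R -> R).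
Hypothesis Ha : 0 < a < 1/2.
Hypothesis HE : 0 <= E <= 1.
Hypothesis Hlam : lam <= -1 + a.
Hypothesis Hth : theta_sol th.
Hypothesis Hth0 : filterlim th (Rbar_locally m_infty) (locally 0).

Let K := 4 * a + 2 * Rabs lam.
Let LL := 1 + 4 * a.
Let f := fun t x => theta_rhs a E lam (th t) x.

Lemma thresh d : 0 < d <= 1/2 -> exists T, forall t, t <= T ->
  K * sin (th t) < sin d /\ sin (th t) <= 1/8.
Proof.
  intro Hd. assert (Hsd : 0 < sin d) by (apply sin_gt_0; pose proof PI2_1; lra).
  assert (HK : 0 <= K) by (unfold K; pose proof (Rabs_pos lam); lra).
  destruct (sin_small_from_lim0 th Hth Hth0 (Rmin (1/8) (sin d / (K + 1)))) as [T HT].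
  { apply Rmin_pos. lra. apply Rdiv_lt_0_compat; lra. }
  exists T. intros t Ht. specialize (HT t Ht).
  pose proof (Rmin_l (1/8) (sin d / (K + 1))). pose proof (Rmin_r (1/8) (sin d / (K + 1))).
  pose proof (sin_pos_strip _ (proj1 (Hth t))).
  split; [|lra].
  assert (sin (th t) * (K + 1) < sin d).
  { apply Rmult_lt_reg_r with (/ (K + 1)). apply Rinv_0_lt_compat; lra.
    replace (sin (th t) * (K + 1) * / (K + 1)) with (sin (th t)) by (field; lra).
    unfold Rdiv in H0. lra. }
  nra.
Qed.

Lemma ivp_here t0 y0 : exists Y, Y t0 = y0 /\ sol a E lam th Y.
Proof.
  destruct (ivp_exists f LL (1 + 4 * a + 2 * Rabs lam) t0 y0) as [Y [H1 [H2 H3]]].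
  - unfold LL; lra.
  - intros t x. apply F_bound; auto. apply Hth.
  - intros t x w. apply (rhs_lip a E lam th Ha HE Hth).
  - intros y Hy. apply rhs_cont; auto. apply (th_cont th Hth).
  - exists Y. split; auto.
Qed.

Definition Yn (n : nat) : R -> R :=
  proj1_sig (constructive_indefinite_description _ (ivp_here (- INR n) 0)).

Lemma Yn_spec n : Yn n (- INR n) = 0 /\ sol a E lam th (Yn n).
Proof. unfold Yn. destruct (constructive_indefinite_description _ _) as [Y HY]. exact HY. Qed.

Lemma sq_lt_abs x y : 0 < y -> x^2 < y^2 -> Rabs x < y.
Proof. intros Hy H. apply Rabs_lt_between. simpl in H. split; nra. Qed.

Theorem exist_Wminus : exists Y, sol a E lam th Y /\ filterlim Y (Rbar_locally m_infty) (locally 0).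
Proof.
  destruct (thresh (1/2) ltac:(lra)) as [T0 HT0].
  destruct (INR_unbounded (- T0)) as [N0 HN0].
  assert (Hband : forall n, (N0 <= n)%nat -> forall t, - INR n <= t <= T0 -> Rabs (Yn n t) < 1/2).
  { intros n Hn t Ht. destruct (Yn_spec n) as [Hi Hs].
    apply (inv_band a E lam th Ha HE Hlam Hth (Yn n) (- INR n) T0 (1/2)); auto. lra.
    intros s Hs'. apply HT0; auto. lra. rewrite Hi, Rabs_R0. lra. }
  assert (Hsq : forall m n, (N0 <= m)%nat -> (m <= n)%nat ->
     (Yn n T0 - Yn m T0)^2 <= / 4 * exp (- INR m) * exp (- T0)).
  { intros m n Hm Hmn.
    assert (HmT : - INR m <= T0). { apply le_INR in Hm. lra. }
    assert (Hnm : - INR n <= - INR m). { apply le_INR in Hmn. lra. }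
    pose proof (contract a E lam th Ha HE Hth (Yn n) (Yn m) (- INR m) T0 (proj2 (Yn_spec n)) (proj2 (Yn_spec m))) as Hc.
    destruct (Yn_spec m) as [Hm0 _]. rewrite Hm0, Rminus_0_r in Hc.
    assert (Hb : Rabs (Yn n (- INR m)) < 1/2) by (apply Hband; [lia | lra]).
    assert (Hb2 : (Yn n (- INR m))^2 <= /4).
    { apply Rabs_lt_between in Hb. simpl. nra. }
    specialize (Hc ltac:(intros; apply HT0; auto) ltac:(intros t Ht; split; left; apply Hband; [lia|lra|lia|lra]) HmT).
    pose proof (exp_pos T0). pose proof (exp_pos (- INR m)).
    apply Rmult_le_reg_r with (exp T0); auto.
    rewrite Rmult_assoc, <- exp_plus. replace (- T0 + T0) with 0 by ring. rewrite exp_0. nra. }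
  assert (Hcv : ex_finite_lim_seq (fun n => Yn n T0)).
  { apply ex_lim_seq_cauchy_corr. intro eps.
    set (c := (eps/2)^2 * 4 * exp T0).
    assert (Hc : 0 < c) by (unfold c; pose proof (cond_pos eps); pose proof (exp_pos T0); apply Rmult_lt_0_compat; [|lra]; nra).
    destruct (INR_unbounded (- ln c)) as [N1 HN1].
    exists (max N0 N1). intros n m Hn Hm.
    set (m0 := max N0 N1) in *.
    assert (Hm0 : exp (- INR m0) < c).
    { rewrite <- (exp_ln c Hc). apply exp_increasing.
      assert (INR N1 <= INR m0) by (apply le_INR; unfold m0; lia). lra. }
    assert (Hk : forall k, (m0 <= k)%nat -> Rabs (Yn k T0 - Yn m0 T0) < eps / 2).
    { intros k Hk. apply sq_lt_abs. pose proof (cond_pos eps); lra.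
      eapply Rle_lt_trans. apply Hsq. unfold m0; lia. auto.
      pose proof (exp_pos T0). pose proof (exp_pos (- T0)).
      assert (Hee : exp (- T0) * exp T0 = 1) by (rewrite <- exp_plus; replace (- T0 + T0) with 0 by ring; apply exp_0).
      unfold c in Hm0.
      apply Rmult_lt_reg_r with (4 * exp T0). lra.
      replace (/ 4 * exp (- INR m0) * exp (- T0) * (4 * exp T0)) with (exp (- INR m0) * (exp (- T0) * exp T0)) by field.
      rewrite Hee, Rmult_1_r.
      lra. }
    pose proof (Hk n Hn). pose proof (Hk m Hm).
    replace (Yn n T0 - Yn m T0) with ((Yn n T0 - Yn m0 T0) - (Yn m T0 - Yn m0 T0)) by ring.
    eapply Rle_lt_trans. apply Rabs_triang. rewrite Rabs_Ropp. lra. }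
  set (cs := real (Lim_seq (fun n => Yn n T0))).
  assert (Hlim : is_lim_seq (fun n => Yn n T0) cs) by (apply Lim_seq_correct'; auto).
  destruct (ivp_here T0 cs) as [Ys [HYs0 HYs]].
  exists Ys. split; auto.
  apply lim_minf_spec. intros eps Heps.
  set (d := Rmin (eps/2) (1/2)).
  assert (Hd : 0 < d <= 1/2) by (unfold d; split; [apply Rmin_pos; lra | apply Rmin_r]).
  assert (Hd2 : d <= eps/2) by (unfold d; apply Rmin_l).
  destruct (thresh d Hd) as [T1 HT1].
  exists (Rmin T1 T0). intros t Ht.
  pose proof (Rmin_l T1 T0). pose proof (Rmin_r T1 T0).
  destruct (INR_unbounded (- t)) as [N2 HN2].
  apply is_lim_seq_spec in Hlim. cbn in Hlim.
  set (eta := eps / 2 * exp (- LL * (T0 - t))).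
  assert (Heta : 0 < eta) by (unfold eta; apply Rmult_lt_0_compat; [lra|apply exp_pos]).
  destruct (Hlim (mkposreal eta Heta)) as [N3 HN3]. simpl in HN3.
  set (n := max (max N0 N2) N3).
  specialize (HN3 n ltac:(unfold n; lia)).
  assert (Hnt : - INR n <= t). { assert (INR N2 <= INR n) by (apply le_INR; unfold n; lia). lra. }
  assert (Hb : Rabs (Yn n t) < d).
  { destruct (Yn_spec n) as [Hi Hs].
    apply (inv_band a E lam th Ha HE Hlam Hth (Yn n) (- INR n) T1 d); auto.
    intros s Hs'. apply HT1; auto. lra. rewrite Hi, Rabs_R0. lra. lra. }
  assert (Hg := gron_bwd a E lam th Ha HE Hth Ys (Yn n) T0 t HYs (proj2 (Yn_spec n)) ltac:(lra)).
  rewrite HYs0 in Hg.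
  assert (Hdiff : Rabs (Ys t - Yn n t) < eps / 2).
  { apply sq_lt_abs. lra. eapply Rle_lt_trans. apply Hg.
    assert (Hq : (cs - Yn n T0)^2 < eta^2).
    { rewrite <- Rabs_Ropp in HN3. replace (- (Yn n T0 - cs)) with (cs - Yn n T0) in HN3 by ring.
      pose proof (Rabs_pos (cs - Yn n T0)).
      replace ((cs - Yn n T0)^2) with ((Rabs (cs - Yn n T0))^2). simpl; nra.
      simpl. rewrite !Rmult_1_r, <- Rabs_mult. apply Rabs_right. apply Rle_ge, Rle_0_sqr. }
    assert (Hx : eta^2 * exp (2 * (1 + 4 * a) * (T0 - t)) = (eps/2)^2).
    { unfold eta. replace ((eps / 2 * exp (- LL * (T0 - t))) ^ 2 * exp (2 * (1 + 4 * a) * (T0 - t)))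
        with ((eps/2)^2 * (exp (- LL * (T0 - t)) * exp (- LL * (T0 - t)) * exp (2 * (1 + 4 * a) * (T0 - t)))) by ring.
      rewrite <- !exp_plus. unfold LL. replace (- (1 + 4 * a) * (T0 - t) + - (1 + 4 * a) * (T0 - t) + 2 * (1 + 4 * a) * (T0 - t)) with 0 by ring.
      rewrite exp_0. ring. }
    pose proof (exp_pos (2 * (1 + 4 * a) * (T0 - t))).
    rewrite <- Hx. apply Rmult_lt_compat_r; auto. }
  rewrite Rminus_0_r.
  replace (Ys t) with ((Ys t - Yn n t) + Yn n t) by ring.
  eapply Rle_lt_trans. apply Rabs_triang. lra.
Qed.

End Exist.

Section Barriers.
Variables (a E lam : R) (th : R -> R).
Hypothesis Ha : 0 < a < 1/2.
Hypothesis HE : 0 <= E <= 1.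
Hypothesis Hlam : lam <= -1 + a.
Hypothesis Hth : theta_sol th.

Let Fy (Y : R -> R) := fun s => theta_rhs a E lam (th s) (Y s).

Lemma below_zero Y : sol a E lam th Y ->
  filterlim Y (Rbar_locally m_infty) (locally 0) -> forall t, Y t < 0.
Proof.
  intros HY Hl. pose proof (proj1 (lim_minf_spec Y 0) Hl) as Hl'.
  pose proof PI2_1.
  assert (Hnp : forall t, ~ 0 < Y t).
  { intros t1 Hp. set (c := Rmin (Y t1) (PI/2)).
    assert (Hc : 0 < c <= PI/2) by (unfold c; split; [apply Rmin_pos; lra | apply Rmin_r]).
    assert (Hc1 : c <= Y t1) by (unfold c; apply Rmin_l).
    destruct (Hl' c ltac:(lra)) as [T HT].
    set (t0 := Rmin T t1 - 1).
    assert (Ht0 : t0 < t1) by (unfold t0; pose proof (Rmin_r T t1); lra).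
    specialize (HT t0 ltac:(unfold t0; pose proof (Rmin_l T t1); lra)).
    rewrite Rminus_0_r in HT. apply Rabs_lt_between in HT.
    destruct (crossing_up Y (Fy Y) t0 t1 c) as [v [Hv1 [Hv2 Hv3]]]; auto; try lra.
    unfold Fy in Hv3. rewrite Hv2 in Hv3.
    pose proof (F_neg_top a E lam Ha HE Hlam (th v) c (proj1 (Hth v)) ltac:(lra)). lra. }
  intro t. destruct (Rlt_or_le (Y t) 0) as [|Hge]; auto. exfalso.
  assert (Y t = 0). { destruct (Req_dec (Y t) 0) as [|Hne]; auto. exfalso. apply (Hnp t). lra. }
  assert (Hd : theta_rhs a E lam (th t) (Y t) < 0).
  { rewrite H0. apply F_neg_top; auto. apply Hth. lra. }
  destruct (deriv_neg_side Y t _ (HY t) Hd 1 ltac:(lra)) as [[w [Hw1 Hw2]] _].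
  apply (Hnp w). lra.
Qed.

Lemma above_mpi Y : sol a E lam th Y ->
  filterlim Y (Rbar_locally p_infty) (locally (- PI)) -> forall t, - PI < Y t.
Proof.
  intros HY Hl. pose proof (proj1 (lim_pinf_spec Y (- PI)) Hl) as Hl'.
  pose proof PI2_1.
  intro t1. destruct (Rlt_or_le (- PI) (Y t1)) as [|Hle]; auto. exfalso.
  assert (Ht2 : exists t2, t1 <= t2 /\ Y t2 < - PI).
  { destruct (Rlt_or_le (Y t1) (- PI)). exists t1; split; lra.
    assert (Y t1 = - PI) by lra.
    assert (Hd : theta_rhs a E lam (th t1) (Y t1) < 0).
    { rewrite H1. apply F_neg_bot; auto. apply Hth. lra. }
    destruct (deriv_neg_side Y t1 _ (HY t1) Hd 1 ltac:(lra)) as [_ [w [Hw1 Hw2]]].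
    exists w. split; lra. }
  destruct Ht2 as [t2 [Ht12 Ht2]].
  assert (Hbelow : forall t, t2 <= t -> Y t < - PI).
  { intros t Ht. destruct (Rlt_or_le (Y t) (- PI)) as [|Hge]; auto. exfalso.
    destruct (crossing_up Y (Fy Y) t2 t (- PI)) as [v [Hv1 [Hv2 Hv3]]]; auto; try lra.
    destruct (Req_dec t t2) as [->|]; lra.
    unfold Fy in Hv3. rewrite Hv2 in Hv3.
    pose proof (F_neg_bot a E lam Ha HE Hlam (th v) (- PI) (proj1 (Hth v)) ltac:(lra)). lra. }
  destruct (Hl' 1 ltac:(lra)) as [T HT].
  set (t3 := Rmax T t2 + 1).
  assert (Ht3 : T < t3 /\ t2 <= t3) by (unfold t3; pose proof (Rmax_l T t2); pose proof (Rmax_r T t2); lra).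
  pose proof (Hbelow t3 ltac:(lra)). specialize (HT t3 ltac:(lra)).
  apply Rabs_lt_between in HT.
  set (c := (Y t3 - PI) / 2).
  destruct (Hl' (- PI - c) ltac:(unfold c; lra)) as [T' HT'].
  set (t4 := Rmax T' t3 + 1).
  assert (Ht4 : T' < t4 /\ t3 < t4) by (unfold t4; pose proof (Rmax_l T' t3); pose proof (Rmax_r T' t3); lra).
  specialize (HT' t4 ltac:(lra)). apply Rabs_lt_between in HT'.
  destruct (crossing_up Y (Fy Y) t3 t4 c) as [v [Hv1 [Hv2 Hv3]]]; auto; try lra.
  all: try (unfold c in *; lra).
  unfold Fy in Hv3. rewrite Hv2 in Hv3.
  pose proof (F_neg_bot a E lam Ha HE Hlam (th v) c (proj1 (Hth v))).
  assert (-2 * PI < c <= - PI) by (unfold c; lra). specialize (H1 H2). lra.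
Qed.

End Barriers.

Lemma shift_deriv (Y : R -> R) c t l : is_derive Y (t + c) l -> is_derive (fun s => Y (s + c)) t l.
Proof.
  intro H. apply is_derive_Reals in H. apply is_derive_Reals.
  replace l with (l * 1) by ring.
  apply (derivable_pt_lim_comp (fun s => s + c) Y t 1 l); auto.
  apply is_derive_Reals. auto_derive; auto. 
Qed.

Lemma shift_lim_p (Y : R -> R) c q : filterlim Y (Rbar_locally p_infty) (locally q) ->
  filterlim (fun s => Y (s + c)) (Rbar_locally p_infty) (locally q).
Proof.
  intro H. apply lim_pinf_spec. pose proof (proj1 (lim_pinf_spec Y q) H) as H'.
  intros eps He. destruct (H' eps He) as [T HT]. exists (T - c). intros t Ht. apply HT. lra.
Qed.

Lemma shift_lim_m (Y : R -> R) c q : filterlim Y (Rbar_locally m_infty) (locally q) ->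
  filterlim (fun s => Y (s + c)) (Rbar_locally m_infty) (locally q).
Proof.
  intro H. apply lim_minf_spec. pose proof (proj1 (lim_minf_spec Y q) H) as H'.
  intros eps He. destruct (H' eps He) as [T HT]. exists (T - c). intros t Ht. apply HT. lra.
Qed.

Lemma between_bounds x w xi lo hi : Rmin x w <= xi <= Rmax x w -> lo <= x <= hi -> lo <= w <= hi -> lo <= xi <= hi.
Proof.
  intros Hxi Hx Hw. destruct (Rle_or_lt x w).
  rewrite Rmin_left in Hxi by lra. rewrite Rmax_right in Hxi by lra. lra.
  rewrite Rmin_right in Hxi by lra. rewrite Rmax_left in Hxi by lra. lra.
Qed.

Section Compare.
Variables (a E E' lam : R) (th y z : R -> R).
Hypothesis Ha : 0 < a < 1/2.
Hypothesis HE : 0 < E <= 1.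
Hypothesis HE' : 0 <= E' < E.
Hypothesis Hlam : lam <= -1 + a.
Hypothesis Hth : theta_sol th.
Hypothesis Hy : sol a E' lam th y.
Hypothesis Hz : sol a E lam th z.
Hypothesis Hy0 : filterlim y (Rbar_locally m_infty) (locally 0).
Hypothesis Hz0 : filterlim z (Rbar_locally m_infty) (locally 0).
Hypothesis Hzr : forall t, - PI < z t < 0.
Hypothesis Hth0 : filterlim th (Rbar_locally m_infty) (locally 0).

Let d := fun t => y t - z t.
Let dd := fun t => theta_rhs a E' lam (th t) (y t) - theta_rhs a E lam (th t) (z t).
Let g := fun t => 2 * a * (E' - E) * (sin (th t))^2 * sin (z t).

Lemma d_deriv t : is_derive d t (dd t).
Proof. apply is_derive_Reals. apply derivable_pt_lim_minus; apply is_derive_Reals; auto. Qed.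

Lemma dd_split t : dd t = (theta_rhs a E' lam (th t) (y t) - theta_rhs a E' lam (th t) (z t)) + g t.
Proof. unfold dd, g, theta_rhs. ring. Qed.

Lemma g_pos t : 0 < g t.
Proof.
  unfold g. pose proof (sin_pos_strip _ (proj1 (Hth t))).
  assert (sin (z t) < 0).
  { destruct (Hzr t). assert (0 < sin (- z t)) by (apply sin_gt_0; lra). rewrite sin_neg in H2. lra. }
  assert (0 < (sin (th t))^2) by (simpl; nra).
  assert (0 < (E - E') * (sin (th t))^2) by (apply Rmult_lt_0_compat; lra).
  replace (2 * a * (E' - E) * sin (th t) ^ 2 * sin (z t)) with (2 * a * ((E - E') * sin (th t) ^ 2) * (- sin (z t))) by ring.
  apply Rmult_lt_0_compat. nra. lra.
Qed.

Lemma d_pos : forall t, 0 < d t.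
Proof.
  pose proof (proj1 (lim_minf_spec y 0) Hy0) as Ly.
  pose proof (proj1 (lim_minf_spec z 0) Hz0) as Lz.
  destruct (sin_small_from_lim0 th Hth Hth0 (1/8) ltac:(lra)) as [T1 HT1].
  destruct (Ly (1/2) ltac:(lra)) as [T2 HT2].
  destruct (Lz (1/2) ltac:(lra)) as [T3 HT3].
  set (T0 := Rmin T1 (Rmin T2 T3) - 1).
  assert (HT0 : forall t, t <= T0 -> sin (th t) <= 1/8 /\ Rabs (y t) <= 1/2 /\ Rabs (z t) <= 1/2).
  { intros t Ht. pose proof (Rmin_l T1 (Rmin T2 T3)). pose proof (Rmin_r T1 (Rmin T2 T3)).
    pose proof (Rmin_l T2 T3). pose proof (Rmin_r T2 T3). unfold T0 in Ht.
    split. left; apply HT1; lra. split.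
    left. specialize (HT2 t ltac:(lra)). rewrite Rminus_0_r in HT2. auto.
    left. specialize (HT3 t ltac:(lra)). rewrite Rminus_0_r in HT3. auto. }
  assert (Hneg : forall t, t <= T0 -> d t < 0 -> 0 < dd t).
  { intros t Ht Hd. destruct (HT0 t Ht) as [Hs [Hyb Hzb]]. rewrite dd_split.
    destruct (F_mvt a E' lam (th t) (y t) (z t)) as [xi [Hxi Heq]]. rewrite Heq.
    apply Rabs_le_between in Hyb. apply Rabs_le_between in Hzb.
    pose proof (between_bounds _ _ _ _ _ Hxi Hyb Hzb).
    assert (Rabs xi <= 1/2) by (apply Rabs_le; lra).
    pose proof (Fd_near0 a E' Ha ltac:(lra) (th t) xi (proj1 (Hth t)) Hs H0).
    pose proof (g_pos t). unfold d in Hd. nra. }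
  assert (Hzero : forall t, d t = 0 -> 0 < dd t).
  { intros t Hd. rewrite dd_split. unfold d in Hd. replace (y t) with (z t) by lra.
    rewrite Rminus_diag, Rplus_0_l. apply g_pos. }
  assert (C1 : forall t1, t1 <= T0 -> 0 <= d t1).
  { intros t1 Ht1. destruct (Rle_or_lt 0 (d t1)) as [|Hlt]; auto. exfalso.
    assert (Hall : forall t, t <= t1 -> d t <= d t1).
    { intros t Ht. destruct (Rle_or_lt (d t) (d t1)) as [|Hgt]; auto. exfalso.
      destruct (crossing_down d dd t t1 (d t1)) as [v [Hv1 [Hv2 Hv3]]]; auto.
      apply d_deriv. destruct (Req_dec t t1) as [->|]; lra. lra.
      specialize (Hneg v ltac:(lra) ltac:(lra)). lra. }
    destruct (Ly (- d t1 / 2) ltac:(lra)) as [T4 HT4].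
    destruct (Lz (- d t1 / 2) ltac:(lra)) as [T5 HT5].
    set (t := Rmin t1 (Rmin T4 T5) - 1).
    pose proof (Rmin_l t1 (Rmin T4 T5)). pose proof (Rmin_r t1 (Rmin T4 T5)).
    pose proof (Rmin_l T4 T5). pose proof (Rmin_r T4 T5).
    specialize (HT4 t ltac:(unfold t; lra)). specialize (HT5 t ltac:(unfold t; lra)).
    rewrite Rminus_0_r in HT4, HT5. apply Rabs_lt_between in HT4. apply Rabs_lt_between in HT5.
    specialize (Hall t ltac:(unfold t; lra)). unfold d in *. lra. }
  assert (C2 : forall t, t <= T0 -> 0 < d t).
  { intros t Ht. destruct (C1 t Ht) as [|Heq]; auto. exfalso.
    destruct (deriv_pos_side d t (dd t) (d_deriv t) (Hzero t (eq_sym Heq)) 1 ltac:(lra)) as [[w [Hw1 Hw2]] _].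
    specialize (C1 w ltac:(lra)). lra. }
  intro t. destruct (Rle_or_lt t T0). auto.
  destruct (Rlt_or_le 0 (d t)) as [|Hle]; auto. exfalso.
  destruct (crossing_down d dd T0 t 0) as [v [Hv1 [Hv2 Hv3]]]; auto.
  apply d_deriv. apply C2; lra.
  specialize (Hzero v Hv2). lra.
Qed.

End Compare.

Lemma sin_lb u al be : 0 < al <= be -> be <= PI/2 -> al <= u <= PI - be -> sin al <= sin u.
Proof.
  intros H1 H2 H3. pose proof PI2_1.
  destruct (Rle_or_lt u (PI/2)).
  - apply sin_incr_1; lra.
  - rewrite <- (sin_PI_x u). assert (sin al <= sin be) by (apply sin_incr_1; lra).
    assert (sin be <= sin (PI - u)) by (apply sin_incr_1; lra). lra.
Qed.

Lemma sin_small_pinf (th : R -> R) : theta_sol th ->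
  filterlim th (Rbar_locally p_infty) (locally PI) ->
  forall eta, 0 < eta -> exists T, forall t, T <= t -> sin (th t) < eta.
Proof.
  intros Hth Hl eta He. pose proof (proj1 (lim_pinf_spec th PI) Hl) as H'.
  destruct (H' eta He) as [T HT].
  exists (T + 1). intros t Ht. specialize (HT t ltac:(lra)).
  destruct (Hth t) as [Hr _]. rewrite Rabs_left in HT by lra.
  rewrite <- sin_PI_x. assert (sin (PI - th t) < PI - th t) by (apply sin_lt_x; lra). lra.
Qed.

Section Pinf.
Variables (a E E' lam : R) (th y z : R -> R).
Hypothesis Ha : 0 < a < 1/2.
Hypothesis HE : 0 < E <= 1.
Hypothesis HE' : 0 <= E' < E.
Hypothesis Hlam : lam <= -1 + a.
Hypothesis Hth : theta_sol th.
Hypothesis Hy : sol a E' lam th y.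
Hypothesis Hz : sol a E lam th z.
Hypothesis Hzr : forall t, - PI < z t < 0.
Hypothesis Hdpos : forall t, 0 < y t - z t.
Hypothesis Hyneg : forall t, y t < 0.
Hypothesis Hthpi : filterlim th (Rbar_locally p_infty) (locally PI).
Hypothesis Hzpi : filterlim z (Rbar_locally p_infty) (locally (- PI)).

Let K := 4 * a + 2 * Rabs lam.
Let Fy := fun t => theta_rhs a E' lam (th t) (y t).

Lemma F_posband t x al : 0 < al <= 1/4 -> - PI + 1/4 <= x <= - al ->
  K * sin (th t) <= sin al / 2 -> sin al / 2 <= theta_rhs a E' lam (th t) x.
Proof.
  intros Hal Hx Hs. pose proof PI2_1.
  pose proof (F_lower a E' lam Ha ltac:(lra) (th t) x (proj1 (Hth t))).
  assert (sin al <= sin (- x)) by (apply (sin_lb (- x) al (1/4)); lra).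
  rewrite sin_neg in H1. fold K in H0. lra.
Qed.

Lemma thresh_pinf al : 0 < al <= 1/4 -> exists T, forall t, T <= t -> K * sin (th t) <= sin al / 2.
Proof.
  intro Hal. assert (HK : 0 <= K) by (unfold K; pose proof (Rabs_pos lam); lra).
  assert (Hs0 : 0 < sin al) by (apply sin_gt_0; pose proof PI2_1; lra).
  - destruct (sin_small_pinf th Hth Hthpi (sin al / (2 * (K + 1)))) as [T HT].
    apply Rdiv_lt_0_compat; lra.
    exists T. intros t Ht. specialize (HT t Ht). pose proof (sin_pos_strip _ (proj1 (Hth t))).
    assert (sin (th t) * (2 * (K + 1)) < sin al).
    { apply Rmult_lt_reg_r with (/ (2 * (K + 1))). apply Rinv_0_lt_compat; lra.
      replace (sin (th t) * (2 * (K + 1)) * / (2 * (K + 1))) with (sin (th t)) by (field; lra).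
      unfold Rdiv in HT. lra. }
    nra.
Qed.

Lemma lin_growth (f df : R -> R) T m t : (forall s, is_derive f s (df s)) -> T <= t ->
  (forall s, T <= s <= t -> m <= df s) -> f T + m * (t - T) <= f t.
Proof.
  intros Hd Ht Hm.
  assert (H := mono_deriv (fun s => f s - m * s) (fun s => df s - m) T t Ht).
  assert (f T - m * T <= f t - m * t).
  { apply H. intros s _. apply is_derive_Reals. apply derivable_pt_lim_minus.
    apply is_derive_Reals. auto. apply is_derive_Reals. auto_derive; auto. ring.
    intros s Hs. specialize (Hm s Hs). lra. }
  lra.
Qed.

Let d := fun t => y t - z t.
Let dd := fun t => theta_rhs a E' lam (th t) (y t) - theta_rhs a E lam (th t) (z t).

Lemma d_deriv' t : is_derive d t (dd t).
Proof. apply is_derive_Reals. apply derivable_pt_lim_minus; apply is_derive_Reals; auto. Qed.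

Lemma y_to0 : filterlim y (Rbar_locally p_infty) (locally 0).
Proof.
  pose proof PI2_1. pose proof PI_4.
  pose proof (proj1 (lim_pinf_spec z (- PI)) Hzpi) as Lz.
  destruct (sin_small_pinf th Hth Hthpi (1/8) ltac:(lra)) as [Ta HTa].
  destruct (thresh_pinf (1/4) ltac:(lra)) as [Tb HTb].
  destruct (Lz (1/2) ltac:(lra)) as [Tc HTc].
  set (T1 := Rmax Ta (Rmax Tb Tc) + 1).
  assert (HT1 : forall t, T1 <= t -> sin (th t) <= 1/8 /\ K * sin (th t) <= sin (1/4) / 2 /\ z t < - PI + 1/2).
  { intros t Ht. pose proof (Rmax_l Ta (Rmax Tb Tc)). pose proof (Rmax_r Ta (Rmax Tb Tc)).
    pose proof (Rmax_l Tb Tc). pose proof (Rmax_r Tb Tc). unfold T1 in Ht.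
    split. left; apply HTa; lra. split. apply HTb; lra.
    specialize (HTc t ltac:(lra)). apply Rabs_lt_between in HTc. lra. }
  destruct (classic (exists t1, T1 <= t1 /\ - PI + 1/2 <= y t1)) as [[t1 [Ht1 Hyt1]]|Hno].
  2: { exfalso.
    assert (Hlow : forall t, T1 <= t -> y t < - PI + 1/2).
    { intros t Ht. destruct (Rlt_or_le (y t) (- PI + 1/2)); auto. exfalso. apply Hno. exists t; split; lra. }
    assert (Hdd : forall t, T1 <= t -> d t / 2 <= dd t).
    { intros t Ht. destruct (HT1 t Ht) as [Hs [_ Hzt]].
      assert (Ed : dd t = (theta_rhs a E' lam (th t) (y t) - theta_rhs a E' lam (th t) (z t)) +
           2 * a * (E' - E) * (sin (th t))^2 * sin (z t)) by (unfold dd, theta_rhs; ring).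
      pose proof (g_pos a E E' th z Ha HE' Hth Hzr t) as Hg. cbv beta in Hg.
      destruct (F_mvt a E' lam (th t) (y t) (z t)) as [xi [Hxi Heq]].
      pose proof (Hzr t). pose proof (Hdpos t). pose proof (Hlow t Ht).
      assert (Hxb : -PI <= xi <= -PI + 1/2) by (apply (between_bounds _ _ _ _ _ Hxi); lra).
      pose proof (Fd_nearpi a E' Ha ltac:(lra) (th t) xi (proj1 (Hth t)) Hs Hxb).
      rewrite Ed, Heq. unfold d. nra. }
    assert (HdT1 := Hdpos T1). fold (d T1) in HdT1.
    set (t2 := T1 + 1 / d T1 + 1).
    assert (Ht2 : T1 <= t2) by (unfold t2; assert (0 < 1 / d T1) by (apply Rdiv_lt_0_compat; lra); lra).
    assert (Hmono : forall t, T1 <= t -> d T1 <= d t).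
    { intros t Ht. apply (mono_deriv d dd T1 t Ht). intros; apply d_deriv'.
      intros s Hs. specialize (Hdd s ltac:(lra)). pose proof (Hdpos s). fold (d s) in H1. lra. }
    pose proof (lin_growth d dd T1 (d T1 / 2) t2 d_deriv' Ht2) as Hg.
    assert (d T1 + d T1 / 2 * (t2 - T1) <= d t2).
    { apply Hg. intros s Hs. specialize (Hdd s ltac:(lra)). specialize (Hmono s ltac:(lra)). lra. }
    assert (d T1 / 2 * (t2 - T1) > 1/2).
    { unfold t2. replace (d T1 / 2 * (T1 + 1 / d T1 + 1 - T1)) with (1/2 + d T1 / 2) by (field; lra). lra. }
    pose proof (Hlow t2 Ht2). pose proof (Hzr t2). unfold d in *. lra. }
  assert (B1 : forall t, t1 <= t -> - PI + 1/4 < y t).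
  { intros t Ht. destruct (Rlt_or_le (- PI + 1/4) (y t)) as [|Hle]; auto. exfalso.
    destruct (crossing_down y Fy t1 t (- PI + 1/4)) as [v [Hv1 [Hv2 Hv3]]]; auto.
    destruct (Req_dec t t1) as [->|]; lra. lra.
    unfold Fy in Hv3. rewrite Hv2 in Hv3.
    destruct (HT1 v ltac:(lra)) as [_ [Hk _]].
    pose proof (F_posband v (- PI + 1/4) (1/4) ltac:(lra) ltac:(lra) Hk).
    assert (0 < sin (1/4)) by (apply sin_gt_0; lra). lra. }
  assert (B2 : forall eta, 0 < eta <= 1/4 -> exists T, forall t, T <= t -> - eta < y t).
  { intros eta Heta. set (al := eta / 2).
    assert (Hal : 0 < al <= 1/4) by (unfold al; lra).
    assert (Hsal : 0 < sin al) by (apply sin_gt_0; lra).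
    destruct (thresh_pinf al Hal) as [Te HTe].
    set (T2 := Rmax Te t1).
    assert (HT2 : Te <= T2 /\ t1 <= T2) by (unfold T2; split; [apply Rmax_l|apply Rmax_r]).
    destruct (classic (exists t2, T2 <= t2 /\ - al < y t2)) as [[t2 [Ht2 Hyt2]]|Hno2].
    - exists t2. intros t Ht. destruct (Rlt_or_le (- eta) (y t)) as [|Hle]; auto. exfalso.
      destruct (crossing_down y Fy t2 t (- eta)) as [v [Hv1 [Hv2 Hv3]]]; auto.
      destruct (Req_dec t t2) as [->|]; unfold al in *; lra. unfold al in *; lra.
      unfold Fy in Hv3. rewrite Hv2 in Hv3.
      pose proof (F_posband v (- eta) al Hal ltac:(unfold al; lra) (HTe v ltac:(lra))). lra.
    - exfalso.
      assert (Hup : forall t, T2 <= t -> y t <= - al).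
      { intros t Ht. destruct (Rle_or_lt (y t) (- al)); auto. exfalso. apply Hno2. exists t. split; lra. }
      set (m := sin al / 2).
      set (t3 := T2 + (PI + 1) / m).
      assert (Ht3 : T2 <= t3) by (unfold t3, m; assert (0 < (PI + 1) / (sin al / 2)) by (apply Rdiv_lt_0_compat; lra); lra).
      pose proof (lin_growth y Fy T2 m t3 Hy Ht3) as Hg.
      assert (y T2 + m * (t3 - T2) <= y t3).
      { apply Hg. intros s Hs. unfold Fy. apply F_posband; auto.
        split. left. apply B1. lra. apply Hup. lra. apply HTe. lra. }
      assert (m * (t3 - T2) = PI + 1) by (unfold t3, m; field; lra).
      pose proof (B1 T2 ltac:(lra)). pose proof (Hyneg t3). lra. }
  apply lim_pinf_spec. intros eps Heps.
  destruct (B2 (Rmin eps (1/4))) as [T HT].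
  { split. apply Rmin_pos; lra. apply Rmin_r. }
  exists T. intros t Ht. specialize (HT t ltac:(lra)). pose proof (Hyneg t).
  pose proof (Rmin_l eps (1/4)). rewrite Rminus_0_r, Rabs_left by lra. lra.
Qed.

End Pinf.

Theorem proposition5 (a E lam : R) :
  0 < a < 1 / 2 -> 0 < E <= 1 -> lam <= -1 + a ->
  saddles_connector a E lam ->
  forall E' : R, 0 <= E' < E -> corridor_K1 a E' lam 0.
Proof.
  intros Ha HE Hlam [thc [zc [Hsc [[Hthc0 Hzc0] [Hthcpi Hzcpi]]]]] E' HE'.
  assert (Htc : theta_sol thc) by (intro t; destruct (Hsc t) as [H1 [H2 _]]; split; auto).
  assert (Hzc : sol a E lam thc zc) by (intro t; apply (Hsc t)).
  split.
  - destruct (exist_Wminus a E' lam thc Ha ltac:(lra) Hlam Htc Hthc0) as [Y [HY HY0]].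
    exists thc, Y. split.
    + intro t. destruct (Hsc t) as [H1 [H2 _]]. split; auto.
    + split; auto.
  - intros th Th Hs [Hth0 HTh0].
    assert (Ht : theta_sol th) by (intro t; destruct (Hs t) as [H1 [H2 _]]; split; auto).
    assert (HTh : sol a E' lam th Th) by (intro t; apply (Hs t)).
    destruct (theta_align thc th Htc Ht) as [c Hc].
    set (z := fun t => zc (t + c)).
    assert (Hz : sol a E lam th z).
    { intro t. unfold z. rewrite Hc. apply shift_deriv. apply Hzc. }
    assert (Hz0 : filterlim z (Rbar_locally m_infty) (locally 0)) by (apply shift_lim_m; auto).
    assert (Hzpi : filterlim z (Rbar_locally p_infty) (locally (- PI))) by (apply shift_lim_p; auto).
    assert (Hthpi : filterlim th (Rbar_locally p_infty) (locally PI)).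
    { apply lim_pinf_spec. pose proof (proj1 (lim_pinf_spec _ _) (shift_lim_p thc c PI Hthcpi)) as H.
      intros eps He. destruct (H eps He) as [T HT]. exists T. intros t Htt. rewrite Hc. apply HT; auto. }
    assert (Hzneg : forall t, z t < 0) by (apply (below_zero a E lam th Ha ltac:(lra) Hlam Ht); auto).
    assert (Hzab : forall t, - PI < z t) by (apply (above_mpi a E lam th Ha ltac:(lra) Hlam Ht); auto).
    assert (Hzr : forall t, - PI < z t < 0) by (intro t; split; auto).
    assert (Hyneg : forall t, Th t < 0) by (apply (below_zero a E' lam th Ha ltac:(lra) Hlam Ht); auto).
    assert (Hd : forall t, 0 < Th t - z t) by (apply (d_pos a E E' lam th Th z); auto).
    assert (HT0 : filterlim Th (Rbar_locally p_infty) (locally 0)) by (apply (y_to0 a E E' lam th Th z); auto).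
    split.
    + intros [_ Hm]. pose proof (proj1 (lim_pinf_spec _ _) Hm) as H1.
      pose proof (proj1 (lim_pinf_spec _ _) HT0) as H2.
      destruct (H1 1 ltac:(lra)) as [T1 HT1]. destruct (H2 1 ltac:(lra)) as [T2 HT2].
      set (t := Rmax T1 T2 + 1).
      specialize (HT1 t ltac:(unfold t; pose proof (Rmax_l T1 T2); lra)).
      specialize (HT2 t ltac:(unfold t; pose proof (Rmax_r T1 T2); lra)).
      apply Rabs_lt_between in HT1. apply Rabs_lt_between in HT2. pose proof PI2_1. lra.
    + split; auto. replace (-2 * PI * IZR 0) with 0 by (simpl; ring). exact HT0.
Qed.
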